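(* Let $L$ be a compound Poisson process, i.e. $\sigma_L=0$ and the Lévy measure $\Pi_L$ of $L$ has finite total mass, and let $-r<T_0<T_1<\dots$ be the jump times and $\Delta L_t$ the jump sizes of $L$. Let $X$ be the CDGARCH$(p,q)$ variance process (the unique strong solution). Then: (a) $\Delta X_t=c_\nu X_{t-}\Delta S_t=c_\nu X_{t-}(\Delta L_t)^2$ for $t\ge -r$; (b) if $f_\nu(-q)=0$, then on each $[T_n,T_{n+1})$, $\xi(X)$ is continuous and $X$ is continuously differentiable with $\frac{d}{dt}X_t=\eta-c_\mu X_t+\xi(X)_t$ for $t\in(T_j,T_{j+1})$. Furthermore, when $p>0$ and $q=0$, $X$ satisfies between consecutive jump times the deterministic delay differential equation $\frac{d}{dt}X_t=\eta-c_\mu X_t+\int_{-p}^0 f_\mu(u)X_{t+u}\,du$ for $t\in(T_j,T_{j+1})$; and when $p=q=0$, $X_t=\frac{\eta}{c_\mu}+\big(X_{T_j+}-\frac{\eta}{c_\mu}\big)e^{-c_\mu(t-T_j)}$ for $t\in(T_j,T_{j+1})$.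
   Context: Let $p,q\ge 0$, $r:=p\vee q$, and $(\Omega,\mathcal F,\mathbb F=(\mathcal F_t)_{t\ge -r},\mathbb P)$ a filtered probability space with the usual conditions, supporting a càdlàg adapted centered Lévy process $(L_t)_{t\ge -r}$, $L_{-r}=0$, with increments independent of the past and stationary, and $\mathbb E[L_1^4]<\infty$; $S=[L,L]$. Parameters: $\eta>0$, $c_\mu,c_\nu>0$, $f_\mu,f_\nu$ nonnegative continuous, supported on $[-p,0]$, $[-q,0]$; $\mu(E)=\int_{E\cap[-p,0]}f_\mu-c_\mu\delta_0(E)$, $\nu(E)=\int_{E\cap[-q,0]}f_\nu+c_\nu\delta_0(E)$. Initial process $\Phi$ càdlàg on $[-r,0]$, adapted to the natural filtration of $L$, $\mathbb E[\sup_{[-r,0]}|\Phi|^2]<\infty$; extend $\Phi_t=\Phi_0$ for $t>0$, $\theta_t=\Phi_t+\eta t\mathbf 1_{[0,\infty)}(t)$. The CDGARCH$(p,q)$ variance process is the unique adapted càdlàg $X$ on $[-r,\infty)$ with $\mathbb E[\sup_{s\in[-r,t]}|X_s|^2]<\infty$ for all $t$, $X=\Phi$ on $[-r,0]$, and $X_t=\theta_t+\int_{-p}^0\int_u^{t+u}X_s\,ds\,\mu(du)+\int_{-q}^0\int_{u+}^{t+u}X_{s-}\,dS_s\,\nu(du)$ for $t>0$. It satisfies $dX_t=(\eta-c_\mu X_t+\xi(X)_t)dt+c_\nu X_{t-}dS_t$, where $\xi(X)_t=\int_{-p}^0 f_\mu(u)X_{t+u}\,du+\int_{-q+}^0 f_\nu(u)X_{t+u-}\,dS_{t+u}$.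 *)

(* Defs.v *)
From Stdlib Require Import Reals.
From Coquelicot Require Import Coquelicot.
Open Scope R_scope.

(* Pathwise model of a compound Poisson path on [-r,oo): jump times T 0 < T 1 < ...
   (with -r < T 0, T n -> oo) and jump sizes J n.  All sums below have only finitely
   many nonzero terms, so Coquelicot's [Series] is the finite sum. *)

Definition left_lim (f : R -> R) (t l : R) : Prop :=
  filterlim f (at_left t) (locally l).

(* L_t = gam (t + r) + sum_{T_k <= t} J_k  (a centred compound Poisson process may
   carry a drift gam; L_{-r} = 0) *)
Definition cp_L (gam r : R) (T J : nat -> R) (t : R) : R :=
  gam * (t + r) + Series (fun k => if Rle_dec (T k) t then J k else 0).

(* S = [L,L], S_t = sum_{T_k <= t} J_k^2 *)
Definition cp_S (T J : nat -> R) (t : R) : R :=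
  Series (fun k => if Rle_dec (T k) t then (J k) ^ 2 else 0).

(* pathwise Stieltjes integral  int_{(a,b]} Y_s dS_s  (Y = X_- is the left-limit process) *)
Definition dS_int (T J : nat -> R) (Y : R -> R) (a b : R) : R :=
  Series (fun k => if Rlt_dec a (T k) then
                     if Rle_dec (T k) b then Y (T k) * (J k) ^ 2 else 0
                   else 0).

(* xi(X)_t = int_{-p}^0 f_mu(u) X_{t+u} du + int_{(-q,0]} f_nu(u) X_{(t+u)-} dS_{t+u}
           = int_{-p}^0 f_mu(u) X_{t+u} du + sum_{t-q < T_k <= t} f_nu(T_k - t) X_{T_k-} J_k^2 *)
Definition xi (p q : R) (fmu fnu : R -> R) (T J : nat -> R) (X Xm : R -> R) (t : R) : R :=
  RInt (fun u => fmu u * X (t + u)) (- p) 0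
  + Series (fun k => if Rlt_dec (t - q) (T k) then
                       if Rle_dec (T k) t then fnu (T k - t) * Xm (T k) * (J k) ^ 2 else 0
                     else 0).

(* The CDGARCH(p,q) integral equation at time t > 0, with
   mu(du) = f_mu(u) du on [-p,0] - c_mu delta_0,  nu(du) = f_nu(u) du on [-q,0] + c_nu delta_0,
   theta_t = Phi_0 + eta t = X_0 + eta t. *)
Definition cdgarch_eq (p q eta cmu cnu : R) (fmu fnu : R -> R) (T J : nat -> R)
  (X Xm : R -> R) (t : R) : Prop :=
  X t = X 0 + eta * t
        + (RInt (fun u => fmu u * RInt X u (t + u)) (- p) 0 - cmu * RInt X 0 t)
        + (RInt (fun u => fnu u * dS_int T J Xm u (t + u)) (- q) 0 + cnu * dS_int T J Xm 0 t).

(* Main.v *)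
Require Import Defs.
From Stdlib Require Import Reals.
From Coquelicot Require Import Coquelicot.
From Stdlib Require Import Lra Lia List Classical ClassicalEpsilon.
Open Scope R_scope.
Set Bullet Behavior "Strict Subproofs".

Lemma ball_R (x e y : R) : ball x e y <-> Rabs (y - x) < e.
Proof. unfold ball; simpl; unfold AbsRing_ball, abs, minus, plus, opp; simpl. tauto. Qed.

Lemma right_lim_eps f x l : filterlim f (at_right x) (locally l) <->
  forall e, 0 < e -> exists d, 0 < d /\ forall y, x < y < x + d -> Rabs (f y - l) < e.
Proof.
  rewrite filterlim_locally. split.
  - intros H e He. destruct (H (mkposreal e He)) as [d Hd].
    exists d; split; [apply cond_pos|]. intros y Hy. 
    assert (B: ball l e (f y)). { apply Hd; [apply ball_R; rewrite Rabs_right; lra| lra]. }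
    apply ball_R in B. exact B.
  - intros H e. destruct (H e (cond_pos e)) as [d [Hd H']].
    exists (mkposreal d Hd). intros y Hy Hxy. apply ball_R in Hy. apply ball_R.
    apply H'. simpl in Hy. apply Rabs_lt_between' in Hy. lra.
Qed.

Lemma left_lim_eps f x l : filterlim f (at_left x) (locally l) <->
  forall e, 0 < e -> exists d, 0 < d /\ forall y, x - d < y < x -> Rabs (f y - l) < e.
Proof.
  rewrite filterlim_locally. split.
  - intros H e He. destruct (H (mkposreal e He)) as [d Hd].
    exists d; split; [apply cond_pos|]. intros y Hy. 
    assert (B: ball l e (f y)). { apply Hd; [apply ball_R; rewrite Rabs_left; lra| lra]. }
    apply ball_R in B. exact B.
  - intros H e. destruct (H e (cond_pos e)) as [d [Hd H']].
    exists (mkposreal d Hd). intros y Hy Hxy. apply ball_R in Hy. apply ball_R.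
    apply H'. simpl in Hy. apply Rabs_lt_between' in Hy. lra.
Qed.

Lemma locally_eps f x l : filterlim f (locally x) (locally l) <->
  forall e, 0 < e -> exists d, 0 < d /\ forall y, Rabs (y - x) < d -> Rabs (f y - l) < e.
Proof.
  rewrite filterlim_locally. split.
  - intros H e He. destruct (H (mkposreal e He)) as [d Hd].
    exists d; split; [apply cond_pos|]. intros y Hy.
    assert (B: ball l e (f y)). { apply Hd; apply ball_R; exact Hy. }
    apply ball_R in B. exact B.
  - intros H e. destruct (H e (cond_pos e)) as [d [Hd H']].
    exists (mkposreal d Hd). intros y Hy. apply ball_R in Hy. apply ball_R. apply H'. exact Hy.
Qed.

Lemma cousin (a b : R) (Q : R -> R -> Prop) :
  a <= b ->
  (forall x, Q x x) ->
  (forall x y z, a <= x -> x <= y -> y <= z -> z <= b -> Q x y -> Q y z -> Q x z) ->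
  (forall x, a <= x <= b -> exists d, 0 < d /\
      (forall y, a <= y -> x - d < y < x -> Q y x) /\
      (forall y, y <= b -> x < y < x + d -> Q x y)) ->
  Q a b.
Proof.
  intros Hab Hrefl Hglue Hloc.
  set (E := fun y => a <= y <= b /\ Q a y).
  assert (Hb : bound E). { exists b. intros y [Hy _]. lra. }
  assert (He : exists y, E y). { exists a. split; [lra| apply Hrefl]. }
  destruct (completeness E Hb He) as [s [Hub Hlub]].
  assert (Has : a <= s). { apply Hub. split; [lra|apply Hrefl]. }
  assert (Hsb : s <= b). { apply Hlub. intros y [Hy _]. lra. }
  destruct (Hloc s (conj Has Hsb)) as [d [Hd [HL HR]]].
  assert (HQs : Q a s).
  { destruct (Req_dec s a) as [Esa|Nsa]. { subst s. apply Hrefl. }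
    assert (Hex : exists y, E y /\ s - d < y).
    { apply NNPP. intro Hn.
      assert (s <= s - d); [|lra].
      apply Hlub. intros y Hy. apply Rnot_lt_le. intro Hlt. apply Hn. exists y; auto. }
    destruct Hex as [y [[Hy1 Hy2] Hy3]].
    assert (y <= s) by (apply Hub; split; auto).
    destruct (Req_dec y s) as [Eys|Nys]. { subst y; auto. }
    apply (Hglue a y s); try lra; auto; apply HL; lra. }
  destruct (Req_dec s b) as [Esb|Nsb]. { subst s; auto. }
  set (z := Rmin b (s + d/2)).
  assert (Hz1 : s < z). { unfold z; apply Rmin_Rgt_r; lra. }
  assert (Hz2 : z <= b). { apply Rmin_l. }
  assert (Hz3 : z < s + d). { unfold z. eapply Rle_lt_trans; [apply Rmin_r| lra]. }
  assert (Ez : E z). { split; [lra|]. apply (Hglue a s z); try lra; auto; apply HR; lra. }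
  assert (z <= s) by (apply Hub; auto). lra.
Qed.

Definition cadlag (f : R -> R) (a b : R) : Prop :=
  (forall x, a <= x < b -> filterlim f (at_right x) (locally (f x))) /\
  (forall x, a < x <= b -> exists l, filterlim f (at_left x) (locally l)).

Definition osc_le (f : R -> R) (y z e : R) :=
  forall v w, y < v < z -> y < w < z -> Rabs (f v - f w) <= e.

Lemma cousin_cadlag (f : R -> R) (a b e : R) (Q : R -> R -> Prop) :
  a <= b -> 0 < e -> cadlag f a b ->
  (forall x, Q x x) ->
  (forall x y z, a <= x -> x <= y -> y <= z -> z <= b -> Q x y -> Q y z -> Q x z) ->
  (forall y z, a <= y -> y < z -> z <= b -> osc_le f y z e -> Q y z) ->
  Q a b.
Proof.
  intros Hab He [Hr Hl] Hrefl Hglue Hpiece.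
  apply cousin; auto.
  intros x Hx.
  assert (HR : exists d1, 0 < d1 /\ forall y, y <= b -> x < y < x + d1 -> Q x y).
  { destruct (Rlt_dec x b) as [Hxb|Hxb].
    - destruct (proj1 (right_lim_eps f x (f x)) (Hr x (conj (proj1 Hx) Hxb)) (e/2)) as [d [Hd H]]; [lra|].
      exists d; split; auto. intros y Hyb Hy. apply Hpiece; try lra.
      intros v w Hv Hw. pose proof (H v ltac:(lra)). pose proof (H w ltac:(lra)).
      replace (f v - f w) with ((f v - f x) - (f w - f x)) by ring.
      eapply Rle_trans; [apply Rabs_triang|]. rewrite Rabs_Ropp. lra.
    - exists 1; split; [lra|]. intros y Hyb Hy. lra. }
  assert (HL : exists d2, 0 < d2 /\ forall y, a <= y -> x - d2 < y < x -> Q y x).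
  { destruct (Rlt_dec a x) as [Hxa|Hxa].
    - destruct (Hl x (conj Hxa (proj2 Hx))) as [l Hlim].
      destruct (proj1 (left_lim_eps f x l) Hlim (e/2)) as [d [Hd H]]; [lra|].
      exists d; split; auto. intros y Hya Hy. apply Hpiece; try lra.
      intros v w Hv Hw. pose proof (H v ltac:(lra)). pose proof (H w ltac:(lra)).
      replace (f v - f w) with ((f v - l) - (f w - l)) by ring.
      eapply Rle_trans; [apply Rabs_triang|]. rewrite Rabs_Ropp. lra.
    - exists 1; split; [lra|]. intros y Hya Hy. lra. }
  destruct HR as [d1 [Hd1 HR]]. destruct HL as [d2 [Hd2 HL]].
  exists (Rmin d1 d2). split. { apply Rmin_pos; auto. }
  split.
  - intros y Hya Hy. apply HL; auto. pose proof (Rmin_r d1 d2). lra.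
  - intros y Hyb Hy. apply HR; auto. pose proof (Rmin_l d1 d2). lra.
Qed.

Lemma UA (f : R -> R) a b : a <= b ->
  (forall e, 0 < e -> exists g, ex_RInt g a b /\ forall x, a <= x <= b -> Rabs (f x - g x) <= e) ->
  ex_RInt f a b.
Proof.
  intros Hab H. apply ex_RInt_Reals_1. intro eps.
  assert (He : 0 < eps / (2 * (b - a + 1))).
  { apply Rdiv_lt_0_compat; [apply cond_pos| lra]. }
  set (e := eps / (2 * (b - a + 1))) in *.
  destruct (constructive_indefinite_description _ (H e He)) as [g [Hg Hfg]].
  pose proof (ex_RInt_Reals_0 _ _ _ Hg) as RI.
  assert (He2 : 0 < eps / 2) by (pose proof (cond_pos eps); lra).
  destruct (RI (mkposreal _ He2)) as [phi [psi [H1 H2]]].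
  exists phi. exists (mkStepFun (StepFun_P28 1 psi (mkStepFun (StepFun_P4 a b e)))).
  rewrite Rmin_left in H1 by lra. rewrite Rmax_right in H1 by lra.
  split.
  - intros t Ht. rewrite Rmin_left in Ht by lra. rewrite Rmax_right in Ht by lra.
    simpl. unfold fct_cte.
    replace (f t - phi t) with ((f t - g t) + (g t - phi t)) by ring.
    eapply Rle_trans; [apply Rabs_triang|]. pose proof (Hfg t Ht). pose proof (H1 t Ht). lra.
  - rewrite StepFun_P30. rewrite StepFun_P18. simpl in H2.
    eapply Rle_lt_trans; [apply Rabs_triang|].
    rewrite Rmult_1_l. rewrite (Rabs_right (e * (b - a))).
    2:{ apply Rle_ge, Rmult_le_pos; lra. }
    assert (e * (b - a) <= eps / 2).
    { unfold e. unfold Rdiv. rewrite Rmult_assoc. 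
      assert (eps * (/ (2 * (b - a + 1)) * (b - a)) <= eps * / 2); [|lra].
      apply Rmult_le_compat_l; [pose proof (cond_pos eps); lra|].
      apply (Rmult_le_reg_l (2 * (b - a + 1))); [lra|].
      field_simplify; lra. }
    lra.
Qed.

Lemma cadlag_ex_RInt f a b : a <= b -> cadlag f a b -> ex_RInt f a b.
Proof.
  intros Hab Hc. apply UA; auto. intros e He.
  apply (cousin_cadlag f a b e (fun y z => exists g, ex_RInt g y z /\ forall x, y <= x <= z -> Rabs (f x - g x) <= e)); auto.
  - intros x. exists f. split. { apply ex_RInt_point. } intros; rewrite Rminus_diag, Rabs_R0; lra.
  - intros x y z _ Hxy Hyz _ [g1 [Hg1 H1]] [g2 [Hg2 H2]].
    exists (fun u => if Rle_dec u y then g1 u else g2 u). split.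
    + apply ex_RInt_Chasles with y.
      * apply ex_RInt_ext with g1; auto. intros u Hu. rewrite Rmin_left in Hu by lra. rewrite Rmax_right in Hu by lra.
        destruct (Rle_dec u y); auto; lra.
      * apply ex_RInt_ext with g2; auto. intros u Hu. rewrite Rmin_left in Hu by lra. rewrite Rmax_right in Hu by lra.
        destruct (Rle_dec u y); auto; lra.
    + intros u Hu. destruct (Rle_dec u y). { apply H1; lra. } apply H2; lra.
  - intros y z _ Hyz _ Hosc.
    exists (fun u => if Rlt_dec y u then if Rlt_dec u z then f ((y+z)/2) else f u else f u). split.
    + apply ex_RInt_ext with (fun _ => f ((y+z)/2)); [|apply ex_RInt_const].
      intros u Hu. rewrite Rmin_left in Hu by lra. rewrite Rmax_right in Hu by lra.
      destruct (Rlt_dec y u); [|lra]. destruct (Rlt_dec u z); auto; lra.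
    + intros u Hu. destruct (Rlt_dec y u); [destruct (Rlt_dec u z)|].
      * apply Hosc; lra.
      * rewrite Rminus_diag, Rabs_R0; lra.
      * rewrite Rminus_diag, Rabs_R0; lra.
Qed.

Lemma cadlag_bounded f a b : a <= b -> cadlag f a b -> exists B, forall x, a <= x <= b -> Rabs (f x) <= B.
Proof.
  intros Hab Hc.
  apply (cousin_cadlag f a b 1 (fun y z => exists B, forall x, y <= x <= z -> Rabs (f x) <= B)); auto; try lra.
  - intros x. exists (Rabs (f x)). intros u Hu. replace u with x by lra. lra.
  - intros x y z _ Hxy Hyz _ [B1 H1] [B2 H2]. exists (Rmax B1 B2). intros u Hu.
    destruct (Rle_dec u y). { eapply Rle_trans; [apply H1; lra| apply Rmax_l]. }
    eapply Rle_trans; [apply H2; lra| apply Rmax_r].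
  - intros y z _ Hyz _ Hosc. exists (Rabs (f y) + Rabs (f z) + (Rabs (f ((y+z)/2)) + 1)).
    intros u Hu. pose proof (Rabs_pos (f y)). pose proof (Rabs_pos (f z)). pose proof (Rabs_pos (f ((y+z)/2))).
    destruct (Req_dec u y). { subst; lra. }
    destruct (Req_dec u z). { subst; lra. }
    pose proof (Hosc u ((y+z)/2) ltac:(lra) ltac:(lra)).
    replace (f u) with ((f u - f ((y+z)/2)) + f ((y+z)/2)) by ring.
    eapply Rle_trans; [apply Rabs_triang|]. lra.
Qed.

Definition avoids (P : list R) (v w : R) := forall x, In x P -> ~ (Rmin v w <= x <= Rmax v w).

Lemma cadlag_partition f a b e : a <= b -> 0 < e -> cadlag f a b ->
  exists P : list R, forall v w, a <= v <= b -> a <= w <= b -> avoids P v w -> Rabs (f v - f w) <= e.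
Proof.
  intros Hab He Hc.
  apply (cousin_cadlag f a b e (fun y z => exists P : list R, forall v w, y <= v <= z -> y <= w <= z -> avoids P v w -> Rabs (f v - f w) <= e)); auto.
  - intros x. exists nil. intros v w Hv Hw _. replace v with x by lra. replace w with x by lra.
    rewrite Rminus_diag, Rabs_R0; lra.
  - intros x y z _ Hxy Hyz _ [P1 H1] [P2 H2]. exists (y :: P1 ++ P2).
    intros v w Hv Hw Hav.
    assert (Hy : ~ (Rmin v w <= y <= Rmax v w)) by (apply Hav; left; auto).
    assert (Hav1 : avoids P1 v w) by (intros u Hu; apply Hav; right; apply in_or_app; auto).
    assert (Hav2 : avoids P2 v w) by (intros u Hu; apply Hav; right; apply in_or_app; auto).
    pose proof (Rmin_l v w). pose proof (Rmin_r v w). pose proof (Rmax_l v w). pose proof (Rmax_r v w).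
    destruct (Rle_dec v y).
    + assert (w < y). { apply Rnot_le_lt. intro. apply Hy. split. lra.
        destruct (Rle_dec v w). rewrite Rmax_right; lra. lra. }
      assert (v < y). { apply Rnot_le_lt. intro. apply Hy. split. 
        rewrite Rmin_right; lra. lra. }
      apply H1; auto; lra.
    + assert (y < w). { apply Rnot_le_lt. intro. apply Hy. split. 
        rewrite Rmin_right; lra. lra. }
      apply H2; auto; lra.
  - intros y z _ Hyz _ Hosc. exists (y :: z :: nil). intros v w Hv Hw Hav.
    assert (Hy : ~ (Rmin v w <= y <= Rmax v w)) by (apply Hav; left; auto).
    assert (Hz : ~ (Rmin v w <= z <= Rmax v w)) by (apply Hav; right; left; auto).
    pose proof (Rmin_l v w). pose proof (Rmin_r v w). pose proof (Rmax_l v w). pose proof (Rmax_r v w).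
    assert (y < v /\ v < z /\ y < w /\ w < z).
    { destruct (Rle_dec v w).
      - rewrite Rmin_left in Hy, Hz by lra. rewrite Rmax_right in Hy, Hz by lra. lra.
      - rewrite Rmin_right in Hy, Hz by lra. rewrite Rmax_left in Hy, Hz by lra. lra. }
    apply Hosc; lra.
Qed.

Lemma cadlag_binop (h : R -> R -> R) f g a b :
  (forall x y, filterlim (fun z : R * R => h (fst z) (snd z)) (filter_prod (locally x) (locally y)) (locally (h x y))) ->
  cadlag f a b -> cadlag g a b -> cadlag (fun u => h (f u) (g u)) a b.
Proof.
  intros Hh [Hf1 Hf2] [Hg1 Hg2]. split.
  - intros x Hx. eapply filterlim_comp_2; [apply Hf1; auto| apply Hg1; auto| apply Hh].
  - intros x Hx. destruct (Hf2 x Hx) as [l1 H1]. destruct (Hg2 x Hx) as [l2 H2].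
    exists (h l1 l2). eapply filterlim_comp_2; [apply H1| apply H2| apply Hh].
Qed.

Lemma cadlag_unop (h : R -> R) f a b :
  (forall x, filterlim h (locally x) (locally (h x))) ->
  cadlag f a b -> cadlag (fun u => h (f u)) a b.
Proof.
  intros Hh [Hf1 Hf2]. split.
  - intros x Hx. eapply filterlim_comp; eauto.
  - intros x Hx. destruct (Hf2 x Hx) as [l1 H1]. exists (h l1). eapply filterlim_comp; eauto.
Qed.

Lemma cadlag_plus f g a b : cadlag f a b -> cadlag g a b -> cadlag (fun u => f u + g u) a b.
Proof. apply cadlag_binop with (h := Rplus). intros x y. apply (filterlim_plus x y). Qed.

Lemma cadlag_mult f g a b : cadlag f a b -> cadlag g a b -> cadlag (fun u => f u * g u) a b.
Proof. apply cadlag_binop with (h := Rmult). intros x y. apply (filterlim_mult x y). Qed.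

Lemma cadlag_opp f a b : cadlag f a b -> cadlag (fun u => - f u) a b.
Proof. apply cadlag_unop with (h := Ropp). intros x. apply (filterlim_opp x). Qed.

Lemma cadlag_minus f g a b : cadlag f a b -> cadlag g a b -> cadlag (fun u => f u - g u) a b.
Proof. intros. unfold Rminus. apply cadlag_plus; auto. apply cadlag_opp; auto. Qed.

Lemma cadlag_abs f a b : cadlag f a b -> cadlag (fun u => Rabs (f u)) a b.
Proof.
  apply cadlag_unop. intros x. apply (proj2 (locally_eps _ _ _)). intros e He. exists e; split; auto.
  intros y Hy. eapply Rle_lt_trans; [apply Rabs_triang_inv2|]. exact Hy.
Qed.

Lemma cadlag_const c a b : cadlag (fun _ => c) a b.
Proof. split. - intros; apply filterlim_const. - intros; exists c; apply filterlim_const. Qed.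

Lemma cadlag_scal c f a b : cadlag f a b -> cadlag (fun u => c * f u) a b.
Proof. intros; apply cadlag_mult; auto; apply cadlag_const. Qed.

Lemma cadlag_sub f a b a' b' : a <= a' -> b' <= b -> cadlag f a b -> cadlag f a' b'.
Proof. intros H1 H2 [Hr Hl]. split; intros x Hx; [apply Hr| apply Hl]; lra. Qed.

Lemma cadlag_shift f a b c : cadlag f a b -> cadlag (fun u => f (c + u)) (a - c) (b - c).
Proof.
  intros [Hr Hl]. split.
  - intros x Hx. specialize (Hr (c + x) ltac:(lra)).
    apply right_lim_eps. intros e He. destruct (proj1 (right_lim_eps _ _ _) Hr e He) as [d [Hd H]].
    exists d; split; auto. intros y Hy. apply H. lra.
  - intros x Hx. destruct (Hl (c + x) ltac:(lra)) as [l Hl']. exists l.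
    apply left_lim_eps. intros e He. destruct (proj1 (left_lim_eps _ _ _) Hl' e He) as [d [Hd H]].
    exists d; split; auto. intros y Hy. apply H. lra.
Qed.

Lemma cadlag_cont f a b : (forall x, a <= x <= b -> filterlim f (locally x) (locally (f x))) -> cadlag f a b.
Proof.
  intros H. split.
  - intros x Hx. eapply filterlim_filter_le_1; [apply filter_le_within| apply H; lra].
  - intros x Hx. exists (f x). eapply filterlim_filter_le_1; [apply filter_le_within| apply H; lra].
Qed.

Lemma cadlag_within f a b :
  (forall x, a <= x <= b -> filterlim f (within (fun v => a <= v <= b) (locally x)) (locally (f x))) -> cadlag f a b.
Proof.
  intros H. split.
  - intros x Hx. apply right_lim_eps. intros e He.
    specialize (H x ltac:(lra)). pose proof (proj1 (filterlim_locally _ (f x)) H (mkposreal e He)) as Hd0.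
    destruct Hd0 as [d Hd]. exists (Rmin d (b - x)). split. { apply Rmin_pos; [apply cond_pos| lra]. }
    intros y Hy. pose proof (Rmin_l d (b - x)). pose proof (Rmin_r d (b - x)).
    assert (B : ball (f x) e (f y)). { apply Hd. apply ball_R. rewrite Rabs_right; lra. lra. }
    apply ball_R in B. exact B.
  - intros x Hx. exists (f x). apply left_lim_eps. intros e He.
    specialize (H x ltac:(lra)). pose proof (proj1 (filterlim_locally _ (f x)) H (mkposreal e He)) as Hd0.
    destruct Hd0 as [d Hd]. exists (Rmin d (x - a)). split. { apply Rmin_pos; [apply cond_pos| lra]. }
    intros y Hy. pose proof (Rmin_l d (x - a)). pose proof (Rmin_r d (x - a)).
    assert (B : ball (f x) e (f y)). { apply Hd. apply ball_R. rewrite Rabs_left; lra. lra. }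
    apply ball_R in B. exact B.
Qed.

Definition ind (al be u : R) : R := if Rle_dec al u then (if Rlt_dec u be then 1 else 0) else 0.

Lemma right_const (f : R -> R) x : (exists d, 0 < d /\ forall y, x < y < x + d -> f y = f x) ->
  filterlim f (at_right x) (locally (f x)).
Proof.
  intros [d [Hd H]]. apply right_lim_eps. intros e He. exists d; split; auto.
  intros y Hy. rewrite H; auto. rewrite Rminus_diag, Rabs_R0; auto.
Qed.

Lemma left_const (f : R -> R) x c : (exists d, 0 < d /\ forall y, x - d < y < x -> f y = c) ->
  filterlim f (at_left x) (locally c).
Proof.
  intros [d [Hd H]]. apply left_lim_eps. intros e He. exists d; split; auto.
  intros y Hy. rewrite H; auto. rewrite Rminus_diag, Rabs_R0; auto.
Qed.

Lemma cadlag_ind al be a b : cadlag (ind al be) a b.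
Proof.
  split.
  - intros x _. apply right_const. unfold ind.
    destruct (Rlt_dec x al).
    + exists (al - x). split; [lra|]. intros y Hy. destruct (Rle_dec al y); [lra|]. destruct (Rle_dec al x); [lra|]. auto.
    + destruct (Rlt_dec x be).
      * exists (be - x). split; [lra|]. intros y Hy. destruct (Rle_dec al y); [|lra]. destruct (Rle_dec al x); [|lra].
        destruct (Rlt_dec y be); [|lra]. destruct (Rlt_dec x be); [|lra]. auto.
      * exists 1. split; [lra|]. intros y Hy. destruct (Rle_dec al y); destruct (Rle_dec al x); try lra;
        destruct (Rlt_dec y be); destruct (Rlt_dec x be); lra.
  - intros x _. 
    destruct (Rle_dec x al).
    + exists 0. apply left_const. exists 1. split; [lra|]. intros y Hy. unfold ind. destruct (Rle_dec al y); [lra|]. auto.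
    + destruct (Rle_dec x be).
      * exists 1. apply left_const. exists (Rmin 1 (x - al)). split. { apply Rmin_pos; lra. }
        intros y Hy. pose proof (Rmin_r 1 (x - al)). unfold ind. destruct (Rle_dec al y); [|lra]. destruct (Rlt_dec y be); [|lra]. auto.
      * exists 0. apply left_const. exists (x - be). split; [lra|]. intros y Hy. unfold ind.
        destruct (Rle_dec al y); auto. destruct (Rlt_dec y be); [lra|]. auto.
Qed.

Lemma RInt_plusR (f g : R -> R) a b : ex_RInt f a b -> ex_RInt g a b ->
  RInt (fun x => f x + g x) a b = RInt f a b + RInt g a b :> R.
Proof. intros. apply (RInt_plus f g a b); auto. Qed.
Lemma RInt_minusR (f g : R -> R) a b : ex_RInt f a b -> ex_RInt g a b ->
  RInt (fun x => f x - g x) a b = RInt f a b - RInt g a b :> R.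
Proof. intros. apply (RInt_minus f g a b); auto. Qed.
Lemma RInt_scalR (f : R -> R) a b c : ex_RInt f a b ->
  RInt (fun x => c * f x) a b = c * RInt f a b :> R.
Proof. intros. apply (RInt_scal f a b c); auto. Qed.
Lemma RInt_oppR (f : R -> R) a b : ex_RInt f a b ->
  RInt (fun x => - f x) a b = - RInt f a b :> R.
Proof. intros. apply (RInt_opp f a b); auto. Qed.
Lemma RInt_ChaslesR (f : R -> R) a b c : ex_RInt f a b -> ex_RInt f b c ->
  RInt f a b + RInt f b c = RInt f a c :> R.
Proof. intros. apply (RInt_Chasles f a b c); auto. Qed.
Lemma RInt_constR a b c : RInt (fun _ => c) a b = c * (b - a) :> R.
Proof. rewrite RInt_const. simpl. unfold scal; simpl; unfold mult; simpl. ring. Qed.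
Lemma RInt_swapR (f : R -> R) a b : ex_RInt f a b -> RInt f b a = - RInt f a b :> R.
Proof. intros. rewrite <- (opp_RInt_swap f a b); auto. Qed.
Lemma RInt_pointR (f : R -> R) a : RInt f a a = 0 :> R.
Proof. apply (RInt_point a f). Qed.
Lemma ex_RInt_plusR (f g : R -> R) a b : ex_RInt f a b -> ex_RInt g a b -> ex_RInt (fun x => f x + g x) a b.
Proof. intros. apply (ex_RInt_plus f g); auto. Qed.
Lemma ex_RInt_scalR (f : R -> R) a b c : ex_RInt f a b -> ex_RInt (fun x => c * f x) a b.
Proof. intros. apply (ex_RInt_scal f a b c); auto. Qed.

Lemma RInt_zero (f : R -> R) a b : (forall x, Rmin a b < x < Rmax a b -> f x = 0) -> RInt f a b = 0 :> R.
Proof. intros H. rewrite (RInt_ext f (fun _ => 0)). { rewrite RInt_constR; ring. } exact H. Qed.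

Lemma RInt_abs_le_fun (f g : R -> R) a b : a <= b -> ex_RInt f a b -> ex_RInt g a b ->
  (forall x, a < x < b -> Rabs (f x) <= g x) -> Rabs (RInt f a b) <= RInt g a b.
Proof.
  intros Hab Hf Hg H. apply Rabs_le. split.
  - rewrite <- RInt_oppR; auto. apply RInt_le; auto. { apply (ex_RInt_opp g); auto. }
    intros x Hx. specialize (H x Hx). apply Rabs_le_between in H. lra.
  - apply RInt_le; auto. intros x Hx. specialize (H x Hx). apply Rabs_le_between in H. lra.
Qed.

Lemma RInt_le_const (f : R -> R) a b M : a <= b -> ex_RInt f a b ->
  (forall x, a < x < b -> f x <= M) -> RInt f a b <= M * (b - a).
Proof. intros. rewrite <- RInt_constR. apply RInt_le; auto. apply ex_RInt_const. Qed.

Lemma RInt_ge0 (f : R -> R) a b : a <= b -> ex_RInt f a b ->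
  (forall x, a < x < b -> 0 <= f x) -> 0 <= RInt f a b.
Proof. intros. replace 0 with (0 * (b - a)) by ring. rewrite <- RInt_constR. apply RInt_le; auto. apply ex_RInt_const. Qed.

Definition clamp (a b x : R) := Rmax a (Rmin b x).

Lemma clamp_bounds a b x : a <= b -> a <= clamp a b x <= b.
Proof. intros. unfold clamp. split. apply Rmax_l. apply Rmax_lub; auto. apply Rmin_l. Qed.

Lemma RInt_ind (g : R -> R) a b al be : a <= b -> al <= be -> cadlag g a b ->
  RInt (fun u => g u * ind al be u) a b = RInt g (clamp a b al) (clamp a b be) :> R.
Proof.
  intros Hab Hal Hg.
  set (ca := clamp a b al). set (cb := clamp a b be).
  assert (Hca : a <= ca <= b) by apply clamp_bounds, Hab.
  assert (Hcb : a <= cb <= b) by apply clamp_bounds, Hab.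
  assert (Hcacb : ca <= cb).
  { unfold ca, cb, clamp. apply Rle_max_compat_l. apply Rle_min_compat_l. auto. }
  assert (Hgi : forall x y, a <= x -> x <= y -> y <= b -> ex_RInt (fun u => g u * ind al be u) x y).
  { intros x y H1 H2 H3. apply cadlag_ex_RInt; auto. apply cadlag_mult. eapply cadlag_sub; [| |apply Hg]; lra. apply cadlag_ind. }
  assert (Hgg : forall x y, a <= x -> x <= y -> y <= b -> ex_RInt g x y).
  { intros x y H1 H2 H3. apply cadlag_ex_RInt; auto. eapply cadlag_sub; [| |apply Hg]; lra. }
  rewrite <- (RInt_ChaslesR _ a ca b); [| apply Hgi; lra| apply Hgi; lra].
  rewrite <- (RInt_ChaslesR _ ca cb b); [| apply Hgi; lra| apply Hgi; lra].
  rewrite (RInt_zero _ a ca). rewrite (RInt_zero _ cb b).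
  rewrite (RInt_ext _ g ca cb). ring.
  - intros x Hx. rewrite Rmin_left in Hx by lra. rewrite Rmax_right in Hx by lra.
    unfold ind. destruct (Rle_dec al x). destruct (Rlt_dec x be). apply Rmult_1_r.
    + exfalso. unfold cb, clamp in Hx. 
      destruct (Rle_dec b be). { rewrite Rmin_left in Hx by lra. rewrite Rmax_right in Hx by lra. lra. }
      rewrite Rmin_right in Hx by lra. destruct (Rle_dec a be). rewrite Rmax_right in Hx by lra. lra.
      rewrite Rmax_left in Hx by lra. lra.
    + exfalso. unfold ca, clamp in Hx.
      destruct (Rle_dec b al). { rewrite Rmin_left in Hx by lra. rewrite Rmax_right in Hx by lra. lra. }
      rewrite Rmin_right in Hx by lra. destruct (Rle_dec a al). rewrite Rmax_right in Hx by lra. lra.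
      rewrite Rmax_left in Hx by lra. lra.
  - intros x Hx. rewrite Rmin_left in Hx by lra. rewrite Rmax_right in Hx by lra.
    unfold ind. destruct (Rle_dec al x); [|ring]. destruct (Rlt_dec x be); [|ring].
    exfalso. unfold cb, clamp in Hx.
    destruct (Rle_dec b be). { rewrite Rmin_left in Hx by lra. rewrite Rmax_right in Hx by lra. lra. }
    rewrite Rmin_right in Hx by lra. destruct (Rle_dec a be). rewrite Rmax_right in Hx by lra. lra.
    rewrite Rmax_left in Hx by lra. lra.
  - intros x Hx. rewrite Rmin_left in Hx by lra. rewrite Rmax_right in Hx by lra.
    unfold ind. destruct (Rle_dec al x); [|ring]. 
    exfalso. unfold ca, clamp in Hx.
    destruct (Rle_dec b al). { rewrite Rmin_left in Hx by lra. rewrite Rmax_right in Hx by lra. lra. }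
    rewrite Rmin_right in Hx by lra. destruct (Rle_dec a al). rewrite Rmax_right in Hx by lra. lra.
    rewrite Rmax_left in Hx by lra. lra.
Qed.

Lemma RInt_extR (f g : R -> R) a b : (forall x, Rmin a b < x < Rmax a b -> f x = g x) ->
  RInt f a b = RInt g a b :> R.
Proof. intros. apply RInt_ext; auto. Qed.

Lemma clamp_diff a b al be : a <= b -> al <= be -> 0 <= clamp a b be - clamp a b al <= be - al.
Proof. intros. unfold clamp, Rmax, Rmin. repeat destruct Rle_dec; lra. Qed.

Fixpoint Nsum (P : list R) (t r u : R) : R :=
  match P with
  | nil => 0
  | x :: P' => ind (x - 2*r - t) (x + 2*r - t) u + Nsum P' t r u
  end.

Lemma ind_bounds al be u : 0 <= ind al be u <= 1.
Proof. unfold ind. repeat destruct Rle_dec; repeat destruct Rlt_dec; lra. Qed.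

Lemma Nsum_nonneg P t r u : 0 <= Nsum P t r u.
Proof. induction P; simpl. lra. pose proof (ind_bounds (a - 2*r - t) (a + 2*r - t) u). lra. Qed.

Lemma Nsum_ge1 P t r u x : 0 < r -> In x P -> Rabs (x - (t + u)) <= r -> 1 <= Nsum P t r u.
Proof.
  intros Hr. induction P; simpl. tauto.
  intros [E|H] Hx.
  - subst. pose proof (Nsum_nonneg P t r u). unfold ind.
    apply Rabs_le_between in Hx.
    destruct (Rle_dec (x - 2 * r - t) u); [|lra]. destruct (Rlt_dec u (x + 2 * r - t)); lra.
  - pose proof (ind_bounds (a - 2*r - t) (a + 2*r - t) u). specialize (IHP H Hx). lra.
Qed.

Lemma cadlag_Nsum P t r a b : cadlag (Nsum P t r) a b.
Proof. induction P; simpl. apply cadlag_const. apply cadlag_plus; auto. apply cadlag_ind. Qed.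

Lemma RInt_wN (w : R -> R) p W P t r : 0 <= p -> 0 < r -> cadlag w (-p) 0 ->
  (forall u, -p <= u <= 0 -> 0 <= w u <= W) ->
  RInt (fun u => w u * Nsum P t r u) (-p) 0 <= W * (4 * r) * INR (length P).
Proof.
  intros Hp Hr Hw HW. induction P as [|x P IH]; simpl.
  - rewrite (RInt_extR _ (fun _ => 0)). rewrite RInt_constR. lra. intros; ring.
  - rewrite (RInt_extR _ (fun u => w u * ind (x - 2*r - t) (x + 2*r - t) u + w u * Nsum P t r u)).
    2:{ intros; ring. }
    rewrite RInt_plusR.
    2:{ apply cadlag_ex_RInt; [lra|]. apply cadlag_mult; auto. apply cadlag_ind. }
    2:{ apply cadlag_ex_RInt; [lra|]. apply cadlag_mult; auto. apply cadlag_Nsum. }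
    rewrite RInt_ind; [|lra|lra|auto].
    pose proof (clamp_bounds (-p) 0 (x - 2*r - t) ltac:(lra)).
    pose proof (clamp_bounds (-p) 0 (x + 2*r - t) ltac:(lra)).
    pose proof (clamp_diff (-p) 0 (x - 2*r - t) (x + 2*r - t) ltac:(lra) ltac:(lra)).
    assert (RInt w (clamp (- p) 0 (x - 2 * r - t)) (clamp (- p) 0 (x + 2 * r - t)) <= W * (4 * r)).
    { eapply Rle_trans. apply RInt_le_const. lra. apply cadlag_ex_RInt. lra. eapply cadlag_sub; [| |apply Hw]; lra.
      intros u Hu. apply (HW u). lra.
      assert (0 <= W). { pose proof (HW 0 ltac:(lra)). lra. }
      apply Rmult_le_compat_l; lra. }
    destruct (length P); simpl in *.
    + lra.
    + destruct n; lra.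
Qed.

Lemma conv_bound (w D : R -> R) p t r e K W (P : list R) :
  0 <= p -> 0 < r -> 0 <= e -> 0 <= K -> cadlag w (-p) 0 -> cadlag D (-p) 0 ->
  (forall u, -p <= u <= 0 -> 0 <= w u <= W) ->
  (forall u, -p < u < 0 -> Rabs (D u) <= K) ->
  (forall u, -p < u < 0 -> (forall x, In x P -> r < Rabs (x - (t + u))) -> Rabs (D u) <= e) ->
  Rabs (RInt (fun u => w u * D u) (-p) 0) <= W * p * e + K * (W * (4 * r) * INR (length P)).
Proof.
  intros Hp Hr He HK Hw HD HW HDK HDe.
  assert (Hpt : forall u, -p < u < 0 -> Rabs (w u * D u) <= w u * e + K * (w u * Nsum P t r u)).
  { intros u Hu. rewrite Rabs_mult. pose proof (HW u ltac:(lra)). rewrite (Rabs_right (w u)) by lra.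
    pose proof (Nsum_nonneg P t r u).
    destruct (classic (forall x, In x P -> r < Rabs (x - (t + u)))) as [Hall|Hn].
    - pose proof (HDe u Hu Hall). 
      assert (0 <= K * (w u * Nsum P t r u)) by (apply Rmult_le_pos; auto; apply Rmult_le_pos; lra).
      assert (w u * Rabs (D u) <= w u * e) by (apply Rmult_le_compat_l; lra). lra.
    - apply not_all_ex_not in Hn. destruct Hn as [x Hx].
      apply imply_to_and in Hx. destruct Hx as [HxP Hx]. apply Rnot_lt_le in Hx.
      pose proof (Nsum_ge1 P t r u x Hr HxP Hx). pose proof (HDK u Hu).
      assert (w u * Rabs (D u) <= w u * K) by (apply Rmult_le_compat_l; lra).
      assert (w u * K <= K * (w u * Nsum P t r u)).
      { rewrite (Rmult_comm K). rewrite Rmult_assoc. apply Rmult_le_compat_l; [lra|].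
        rewrite <- (Rmult_1_l K) at 1. apply Rmult_le_compat_r; lra. }
      assert (0 <= w u * e) by (apply Rmult_le_pos; lra). lra. }
  eapply Rle_trans. apply RInt_abs_le_fun with (g := fun u => w u * e + K * (w u * Nsum P t r u)); auto; try lra.
  - apply cadlag_ex_RInt; [lra|]. apply cadlag_mult; auto.
  - apply cadlag_ex_RInt; [lra|]. apply cadlag_plus. apply cadlag_mult; auto. apply cadlag_const.
    apply cadlag_scal. apply cadlag_mult; auto. apply cadlag_Nsum.
  - rewrite RInt_plusR.
    2:{ apply cadlag_ex_RInt; [lra|]. apply cadlag_mult; auto. apply cadlag_const. }
    2:{ apply cadlag_ex_RInt; [lra|]. apply cadlag_scal. apply cadlag_mult; auto. apply cadlag_Nsum. }
    rewrite RInt_scalR.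
    2:{ apply cadlag_ex_RInt; [lra|]. apply cadlag_mult; auto. apply cadlag_Nsum. }
    pose proof (RInt_wN w p W P t r Hp Hr Hw HW).
    assert (RInt (fun u => w u * e) (-p) 0 <= W * p * e).
    { eapply Rle_trans. apply RInt_le_const with (M := W * e). lra.
      apply cadlag_ex_RInt; [lra|]. apply cadlag_mult; auto. apply cadlag_const.
      intros u Hu. apply Rmult_le_compat_r; auto. apply HW; lra. lra. }
    assert (K * RInt (fun u => w u * Nsum P t r u) (-p) 0 <= K * (W * (4 * r) * INR (length P))).
    { apply Rmult_le_compat_l; auto. }
    lra.
Qed.

Lemma lip_cadlag (f : R -> R) a b L : 0 <= L ->
  (forall x y, a <= x <= b -> a <= y <= b -> Rabs (f x - f y) <= L * Rabs (x - y)) -> cadlag f a b.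
Proof.
  intros HL H. split.
  - intros x Hx. apply right_lim_eps. intros e He.
    exists (Rmin (b - x) (e / (L + 1))). split. { apply Rmin_pos; [lra| apply Rdiv_lt_0_compat; lra]. }
    intros y Hy. pose proof (Rmin_l (b - x) (e / (L + 1))). pose proof (Rmin_r (b - x) (e / (L + 1))).
    eapply Rle_lt_trans. apply H; lra. rewrite Rabs_right by lra.
    apply Rle_lt_trans with ((L + 1) * (y - x)). nra.
    apply Rlt_le_trans with ((L+1) * (e / (L+1))). apply Rmult_lt_compat_l; lra.
    right. field. lra.
  - intros x Hx. exists (f x). apply left_lim_eps. intros e He.
    exists (Rmin (x - a) (e / (L + 1))). split. { apply Rmin_pos; [lra| apply Rdiv_lt_0_compat; lra]. }
    intros y Hy. pose proof (Rmin_l (x - a) (e / (L + 1))). pose proof (Rmin_r (x - a) (e / (L + 1))).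
    eapply Rle_lt_trans. apply H; lra. rewrite Rabs_left by lra.
    apply Rle_lt_trans with ((L + 1) * (x - y)). nra.
    apply Rlt_le_trans with ((L+1) * (e / (L+1))). apply Rmult_lt_compat_l; lra.
    right. field. lra.
Qed.

Section XInt.
Variables (X : R -> R) (c M B : R).
Hypothesis HX : cadlag X c M.
Hypothesis HB : forall x, c <= x <= M -> Rabs (X x) <= B.

Lemma exX a b : c <= a <= M -> c <= b <= M -> ex_RInt X a b.
Proof.
  intros Ha Hb. destruct (Rle_dec a b).
  - apply cadlag_ex_RInt; auto. eapply cadlag_sub; [| |apply HX]; lra.
  - apply ex_RInt_swap. apply cadlag_ex_RInt; [lra|]. eapply cadlag_sub; [| |apply HX]; lra.
Qed.

Lemma RInt_I0 a b : c <= a <= M -> c <= b <= M -> RInt X a b = RInt X c b - RInt X c a :> R.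
Proof.
  intros Ha Hb. pose proof (RInt_ChaslesR X c a b ltac:(apply exX; lra) ltac:(apply exX; lra)). lra.
Qed.

Lemma RInt_X_bound a b : c <= a <= M -> c <= b <= M -> Rabs (RInt X a b) <= B * Rabs (b - a).
Proof.
  intros Ha Hb. destruct (Rle_dec a b).
  - rewrite (Rabs_right (b - a)) by lra. rewrite Rmult_comm. apply abs_RInt_le_const; auto. apply exX; auto.
    intros; apply HB; lra.
  - rewrite RInt_swapR by (apply exX; auto). rewrite Rabs_Ropp. rewrite (Rabs_left (b - a)) by lra.
    replace (- (b - a)) with (a - b) by ring. rewrite Rmult_comm. apply abs_RInt_le_const; try lra. apply exX; auto.
    intros; apply HB; lra.
Qed.

Lemma I0_lip x y : c <= x <= M -> c <= y <= M -> Rabs (RInt X c x - RInt X c y) <= B * Rabs (x - y).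
Proof. intros. rewrite <- RInt_I0 by auto. apply RInt_X_bound; auto. Qed.

Lemma avg_bound v h e : h <> 0 -> c <= v <= M -> c <= v + h <= M ->
  (forall y, Rmin v (v+h) <= y <= Rmax v (v+h) -> Rabs (X y - X v) <= e) ->
  Rabs (RInt X v (v + h) / h - X v) <= e.
Proof.
  intros Hh Hv Hvh H.
  assert (E : RInt X v (v + h) / h - X v = RInt (fun y => X y - X v) v (v + h) / h).
  { rewrite RInt_minusR. rewrite RInt_constR. field. auto. apply exX; auto. apply ex_RInt_const. }
  rewrite E. unfold Rdiv. rewrite Rabs_mult. rewrite Rabs_Rinv by auto.
  assert (0 < Rabs h) by (apply Rabs_pos_lt; auto).
  apply (Rmult_le_reg_r (Rabs h)); auto. rewrite Rmult_assoc, Rinv_l by lra. rewrite Rmult_1_r.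
  assert (Hex : ex_RInt (fun y => X y - X v) v (v + h)).
  { apply (ex_RInt_minus X (fun _ => X v)). apply exX; auto. apply ex_RInt_const. }
  destruct (Rle_dec 0 h).
  - rewrite (Rabs_right h) by lra. replace h with ((v + h) - v) at 2 by ring. rewrite Rmult_comm.
    apply abs_RInt_le_const; [lra| exact Hex|]. intros y Hy. apply H.
    rewrite Rmin_left, Rmax_right by lra. lra.
  - rewrite RInt_swapR by (apply ex_RInt_swap; exact Hex). rewrite Rabs_Ropp. rewrite (Rabs_left h) by lra.
    replace (- h) with (v - (v + h)) by ring. rewrite Rmult_comm.
    apply abs_RInt_le_const; [lra| apply ex_RInt_swap; exact Hex|]. intros y Hy. apply H.
    rewrite Rmin_right, Rmax_left by lra. lra.
Qed.

End XInt.

Lemma half_arith Q e : 0 <= Q -> 0 < e -> Q * (e / (2 * (Q + 1))) < e / 2.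
Proof.
  intros HQ He. apply Rmult_lt_reg_r with (2 * (Q + 1)). lra.
  replace (Q * (e / (2 * (Q + 1))) * (2 * (Q + 1))) with (Q * e) by (field; lra).
  nra.
Qed.

Lemma RInt_shift_lip (X : R -> R) c M B a b lo hi :
  cadlag X c M -> (forall x, c <= x <= M -> Rabs (X x) <= B) -> lo <= hi ->
  (forall u, lo <= u <= hi -> c <= a + u <= M /\ c <= b + u <= M) ->
  forall x y, lo <= x <= hi -> lo <= y <= hi ->
  Rabs (RInt X (a + x) (b + x) - RInt X (a + y) (b + y)) <= (2 * B) * Rabs (x - y).
Proof.
  intros HX HB Hlh Hd x y Hx Hy.
  destruct (Hd x Hx) as [H1 H2]. destruct (Hd y Hy) as [H3 H4].
  rewrite (RInt_I0 X c M HX (a + x)) by auto. rewrite (RInt_I0 X c M HX (a + y)) by auto.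
  replace (RInt X c (b + x) - RInt X c (a + x) - (RInt X c (b + y) - RInt X c (a + y)))
    with ((RInt X c (b + x) - RInt X c (b + y)) - (RInt X c (a + x) - RInt X c (a + y))) by ring.
  eapply Rle_trans. apply Rabs_triang. rewrite Rabs_Ropp.
  pose proof (I0_lip X c M B HX HB (b + x) (b + y) H2 H4).
  pose proof (I0_lip X c M B HX HB (a + x) (a + y) H1 H3).
  replace (b + x - (b + y)) with (x - y) in * by ring.
  replace (a + x - (a + y)) with (x - y) in * by ring. lra.
Qed.

Section Conv.
Variables (X w : R -> R) (c M p W : R).
Hypothesis HX : cadlag X c M.
Hypothesis Hp : 0 <= p.
Hypothesis Hcp : c <= - p.
Hypothesis Hw : cadlag w (-p) 0.
Hypothesis HW : forall u, -p <= u <= 0 -> 0 <= w u <= W.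

Definition Gc t := RInt (fun u => w u * X (t + u)) (-p) 0.
Definition Ac t := RInt (fun u => w u * RInt X u (t + u)) (-p) 0.

Lemma W_nonneg : 0 <= W.
Proof. pose proof (HW 0 ltac:(lra)). lra. Qed.

Lemma cadlag_wX s : c <= s - p -> s <= M -> cadlag (fun u => w u * X (s + u)) (-p) 0.
Proof.
  intros. apply cadlag_mult; auto. eapply cadlag_sub; [| |apply (cadlag_shift X c M s HX)]; lra.
Qed.

Lemma Gc_cont t : c <= t - p -> t <= M -> forall e, 0 < e -> exists d, 0 < d /\
  forall s, Rabs (s - t) < d -> c <= s - p -> s <= M -> Rabs (Gc s - Gc t) < e.
Proof.
  intros Ht1 Ht2 e He.
  destruct (cadlag_bounded X c M ltac:(lra) HX) as [B HB].
  assert (HB0 : 0 <= B) by (pose proof (HB M ltac:(lra)); pose proof (Rabs_pos (X M)); lra).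
  pose proof W_nonneg as HW0.
  set (e' := e / (2 * (W * p + 1))).
  assert (He' : 0 < e') by (unfold e'; apply Rdiv_lt_0_compat; nra).
  destruct (cadlag_partition X c M e' ltac:(lra) He' HX) as [P HP].
  set (Q := 2 * B * W * 4 * INR (length P)).
  assert (HQ : 0 <= Q) by (unfold Q; pose proof (pos_INR (length P)); repeat apply Rmult_le_pos; lra).
  exists (e / (2 * (Q + 1))). split. { apply Rdiv_lt_0_compat; lra. }
  intros s Hs Hs1 Hs2.
  destruct (Req_dec s t) as [E|Nst]. { subst. rewrite Rminus_diag, Rabs_R0. lra. }
  assert (Hr : 0 < Rabs (s - t)) by (apply Rabs_pos_lt; lra).
  unfold Gc. rewrite <- RInt_minusR.
  2:{ apply cadlag_ex_RInt; [lra|]. apply cadlag_wX; lra. }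
  2:{ apply cadlag_ex_RInt; [lra|]. apply cadlag_wX; lra. }
  rewrite (RInt_extR _ (fun u => w u * (X (s + u) - X (t + u)))) by (intros; ring).
  eapply Rle_lt_trans.
  apply (conv_bound w (fun u => X (s + u) - X (t + u)) p t (Rabs (s - t)) e' (2 * B) W P); auto; try lra.
  - apply cadlag_minus; eapply cadlag_sub; [| | apply (cadlag_shift X c M s HX)| | | apply (cadlag_shift X c M t HX)]; lra.
  - intros u Hu. eapply Rle_trans. apply Rabs_triang. rewrite Rabs_Ropp.
    pose proof (HB (s + u) ltac:(lra)). pose proof (HB (t + u) ltac:(lra)). lra.
  - intros u Hu Hall. apply HP; try lra.
    intros x Hx Hin. specialize (Hall x Hx).
    assert (Rabs (x - (t + u)) <= Rabs (s - t)); [|lra].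
    destruct (Rle_dec s t).
    + rewrite Rmin_left, Rmax_right in Hin by lra. rewrite (Rabs_left1 (s - t)) by lra.
      apply Rabs_le. lra.
    + rewrite Rmin_right, Rmax_left in Hin by lra. rewrite (Rabs_right (s - t)) by lra.
      apply Rabs_le. lra.
  - assert (W * p * e' < e / 2) by (unfold e'; apply half_arith; nra).
    assert (2 * B * (W * (4 * Rabs (s - t)) * INR (length P)) <= Q * (e / (2 * (Q + 1)))).
    { replace (2 * B * (W * (4 * Rabs (s - t)) * INR (length P))) with (Q * Rabs (s - t)) by (unfold Q; ring).
      apply Rmult_le_compat_l; lra. }
    pose proof (half_arith Q e HQ He). lra.
Qed.

Lemma cadlag_wI s B : 0 <= s <= M -> (forall x, c <= x <= M -> Rabs (X x) <= B) -> 0 <= B ->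
  cadlag (fun u => w u * RInt X u (s + u)) (-p) 0.
Proof.
  intros Hs HB HB0. apply cadlag_mult; auto.
  apply lip_cadlag with (L := 2 * B). lra.
  intros x y Hx Hy.
  pose proof (RInt_shift_lip X c M B 0 s (-p) 0 HX HB ltac:(lra)) as L.
  assert (L' : forall u, -p <= u <= 0 -> c <= 0 + u <= M /\ c <= s + u <= M) by (intros; lra).
  pose proof (L L' x y Hx Hy) as L2. rewrite !Rplus_0_l in L2. exact L2.
Qed.

Lemma Ac_deriv t : 0 <= t <= M -> forall e, 0 < e -> exists d, 0 < d /\
  forall h, h <> 0 -> Rabs h < d -> 0 <= t + h <= M ->
  Rabs ((Ac (t + h) - Ac t) / h - Gc t) < e.
Proof.
  intros Ht e He.
  destruct (cadlag_bounded X c M ltac:(lra) HX) as [B HB].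
  assert (HB0 : 0 <= B) by (pose proof (HB M ltac:(lra)); pose proof (Rabs_pos (X M)); lra).
  pose proof W_nonneg as HW0.
  set (e' := e / (2 * (W * p + 1))).
  assert (He' : 0 < e') by (unfold e'; apply Rdiv_lt_0_compat; nra).
  destruct (cadlag_partition X c M e' ltac:(lra) He' HX) as [P HP].
  set (Q := 2 * B * W * 4 * INR (length P)).
  assert (HQ : 0 <= Q) by (unfold Q; pose proof (pos_INR (length P)); repeat apply Rmult_le_pos; lra).
  exists (e / (2 * (Q + 1))). split. { apply Rdiv_lt_0_compat; lra. }
  intros h Hh0 Hh Hth.
  assert (Hr : 0 < Rabs h) by (apply Rabs_pos_lt; lra).
  set (D := fun u => RInt X (t + u) (t + u + h) / h - X (t + u)).
  assert (Eq : (Ac (t + h) - Ac t) / h - Gc t = RInt (fun u => w u * D u) (-p) 0).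
  { unfold Ac, Gc. symmetry.
    rewrite (RInt_extR (fun u => w u * D u) (fun u => (/h) * (w u * RInt X u (t + h + u)) + ((- /h) * (w u * RInt X u (t + u)) + (-1) * (w u * X (t + u))))).
    2:{ intros u Hu. rewrite Rmin_left, Rmax_right in Hu by lra. unfold D.
        rewrite (RInt_I0 X c M HX (t + u)) by lra. rewrite (RInt_I0 X c M HX u) by lra.
        rewrite (RInt_I0 X c M HX u (t + u)) by lra.
        replace (t + u + h) with (t + h + u) by ring. field. auto. }
    rewrite RInt_plusR.
    2:{ apply ex_RInt_scalR. apply cadlag_ex_RInt; [lra|]. apply (cadlag_wI (t + h) B); auto; lra. }
    2:{ apply ex_RInt_plusR; apply ex_RInt_scalR; apply cadlag_ex_RInt; try lra.
        apply (cadlag_wI t B); auto; lra. apply cadlag_wX; lra. }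
    rewrite RInt_plusR.
    2:{ apply ex_RInt_scalR. apply cadlag_ex_RInt; [lra|]. apply (cadlag_wI t B); auto; lra. }
    2:{ apply ex_RInt_scalR. apply cadlag_ex_RInt; [lra|]. apply cadlag_wX; lra. }
    rewrite !RInt_scalR.
    2:{ apply cadlag_ex_RInt; [lra|]. apply cadlag_wX; lra. }
    2:{ apply cadlag_ex_RInt; [lra|]. apply (cadlag_wI t B); auto; lra. }
    2:{ apply cadlag_ex_RInt; [lra|]. apply (cadlag_wI (t + h) B); auto; lra. }
    field. auto. }
  rewrite Eq.
  eapply Rle_lt_trans.
  apply (conv_bound w D p t (Rabs h) e' (2 * B) W P); auto; try lra.
  - unfold D. apply cadlag_minus.
    + apply lip_cadlag with (L := 2 * B / Rabs h). apply Rdiv_le_0_compat; lra.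
      intros x y Hx Hy. unfold Rdiv. rewrite <- Rmult_minus_distr_r. rewrite Rabs_mult.
      rewrite Rabs_Rinv by auto.
      pose proof (RInt_shift_lip X c M B t (t + h) (-p) 0 HX HB ltac:(lra)) as L.
      assert (Hxy : Rabs (RInt X (t + x) (t + h + x) - RInt X (t + y) (t + h + y)) <= 2 * B * Rabs (x - y)).
      { apply L; auto. intros u Hu. lra. }
      replace (t + x + h) with (t + h + x) by ring. replace (t + y + h) with (t + h + y) by ring.
      apply Rle_trans with (2 * B * Rabs (x - y) * / Rabs h).
      { apply Rmult_le_compat_r; auto. left; apply Rinv_0_lt_compat; auto. }
      right. field. lra.
    + eapply cadlag_sub; [| | apply (cadlag_shift X c M t HX)]; lra.
  - intros u Hu. unfold D. eapply Rle_trans. apply Rabs_triang. rewrite Rabs_Ropp.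
    pose proof (HB (t + u) ltac:(lra)).
    assert (Rabs (RInt X (t + u) (t + u + h) / h) <= B).
    { unfold Rdiv. rewrite Rabs_mult, Rabs_Rinv by auto.
      pose proof (RInt_X_bound X c M B HX HB (t + u) (t + u + h) ltac:(lra) ltac:(lra)).
      replace (t + u + h - (t + u)) with h in H0 by ring.
      apply (Rmult_le_reg_r (Rabs h)); auto. rewrite Rmult_assoc, Rinv_l by lra. lra. }
    lra.
  - intros u Hu Hall. unfold D. apply (avg_bound X c M HX); auto; try lra.
    intros y Hy. apply HP; try lra.
    + split. apply Rle_trans with (Rmin (t + u) (t + u + h)). apply Rmin_glb; lra. apply Hy.
      apply Rle_trans with (Rmax (t + u) (t + u + h)). apply Hy. apply Rmax_lub; lra.
    + intros x Hx Hin. specialize (Hall x Hx).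
      assert (Rabs (x - (t + u)) <= Rabs h); [|lra].
      destruct (Rle_dec 0 h).
      * rewrite Rmin_left, Rmax_right in Hy by lra. rewrite (Rabs_right h) by lra.
        apply Rabs_le. destruct (Rle_dec y (t + u)).
        { rewrite Rmin_left, Rmax_right in Hin by lra. lra. }
        { rewrite Rmin_right, Rmax_left in Hin by lra. lra. }
      * rewrite Rmin_right, Rmax_left in Hy by lra. rewrite (Rabs_left h) by lra.
        apply Rabs_le. destruct (Rle_dec y (t + u)).
        { rewrite Rmin_left, Rmax_right in Hin by lra. lra. }
        { rewrite Rmin_right, Rmax_left in Hin by lra. lra. }
  - assert (W * p * e' < e / 2) by (unfold e'; apply half_arith; nra).
    assert (2 * B * (W * (4 * Rabs h) * INR (length P)) <= Q * (e / (2 * (Q + 1)))).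
    { replace (2 * B * (W * (4 * Rabs h) * INR (length P))) with (Q * Rabs h) by (unfold Q; ring).
      apply Rmult_le_compat_l; lra. }
    pose proof (half_arith Q e HQ He). lra.
Qed.

End Conv.

Definition limS (Z : R -> Prop) (q : R -> R) (l : R) :=
  forall e, 0 < e -> exists d, 0 < d /\ forall h, Z h -> Rabs h < d -> Rabs (q h - l) < e.

Lemma limS_plus Z q1 q2 l1 l2 : limS Z q1 l1 -> limS Z q2 l2 -> limS Z (fun h => q1 h + q2 h) (l1 + l2).
Proof.
  intros H1 H2 e He. destruct (H1 (e/2) ltac:(lra)) as [d1 [Hd1 K1]]. destruct (H2 (e/2) ltac:(lra)) as [d2 [Hd2 K2]].
  exists (Rmin d1 d2). split. apply Rmin_pos; auto. intros h Hs Hh.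
  pose proof (Rmin_l d1 d2). pose proof (Rmin_r d1 d2).
  specialize (K1 h Hs ltac:(lra)). specialize (K2 h Hs ltac:(lra)).
  replace (q1 h + q2 h - (l1 + l2)) with ((q1 h - l1) + (q2 h - l2)) by ring.
  eapply Rle_lt_trans. apply Rabs_triang. lra.
Qed.

Lemma limS_scal Z q l c : limS Z q l -> limS Z (fun h => c * q h) (c * l).
Proof.
  intros H e He. destruct (H (e / (Rabs c + 1))) as [d [Hd K]]. { apply Rdiv_lt_0_compat; auto. pose proof (Rabs_pos c); lra. }
  exists d. split; auto. intros h Hs Hh. specialize (K h Hs Hh).
  rewrite <- Rmult_minus_distr_l. rewrite Rabs_mult.
  pose proof (Rabs_pos c).
  apply Rle_lt_trans with ((Rabs c + 1) * Rabs (q h - l)). { pose proof (Rabs_pos (q h - l)). nra. }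
  apply Rlt_le_trans with ((Rabs c + 1) * (e / (Rabs c + 1))). apply Rmult_lt_compat_l; lra.
  right. field. lra.
Qed.

Lemma limS_const Z l : limS Z (fun _ => l) l.
Proof. intros e He. exists 1. split. lra. intros. rewrite Rminus_diag, Rabs_R0. auto. Qed.

Lemma limS_ext Z q1 q2 l d0 : 0 < d0 -> (forall h, Z h -> Rabs h < d0 -> q1 h = q2 h) -> limS Z q1 l -> limS Z q2 l.
Proof.
  intros Hd0 E H e He. destruct (H e He) as [d [Hd K]]. exists (Rmin d d0). split. apply Rmin_pos; auto.
  intros h Hs Hh. pose proof (Rmin_l d d0). pose proof (Rmin_r d d0). rewrite <- E; auto; try lra. apply K; auto; lra.
Qed.

Lemma limS_sum Z (q : nat -> R -> R) (l : nat -> R) N :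
  (forall k, (k <= N)%nat -> limS Z (q k) (l k)) -> limS Z (fun h => sum_n (fun k => q k h) N) (sum_n l N).
Proof.
  induction N; intros H.
  - apply limS_ext with (q1 := q 0%nat) (d0 := 1). lra. intros; rewrite sum_O; auto.
    rewrite sum_O. apply H; auto.
  - apply limS_ext with (q1 := fun h => sum_n (fun k => q k h) N + q (Datatypes.S N) h) (d0 := 1). lra.
    intros; rewrite sum_Sn; auto.
    rewrite sum_Sn. apply limS_plus. apply IHN. intros; apply H; lia. apply H; auto.
Qed.

Lemma limS_sub Z Z' q l : (forall h, Z' h -> Z h) -> limS Z q l -> limS Z' q l.
Proof. intros HS H e He. destruct (H e He) as [d [Hd K]]. exists d. split; auto. Qed.

Definition Spos h := 0 < h.
Definition Sneg h := h < 0.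

Lemma limS_deriv f x l : limS Spos (fun h => (f (x + h) - f x) / h) l -> limS Sneg (fun h => (f (x + h) - f x) / h) l ->
  is_derive f x l.
Proof.
  intros H1 H2. apply is_derive_Reals. intros e He.
  destruct (H1 e He) as [d1 [Hd1 K1]]. destruct (H2 e He) as [d2 [Hd2 K2]].
  assert (Hd : 0 < Rmin d1 d2) by (apply Rmin_pos; auto).
  exists (mkposreal _ Hd). intros h Hh0 Hh. simpl in Hh. pose proof (Rmin_l d1 d2). pose proof (Rmin_r d1 d2).
  destruct (Rlt_dec 0 h). apply K1; unfold Spos; auto; lra. apply K2; unfold Sneg; [lra| lra].
Qed.

Lemma limS_cont_left f x l : limS Sneg (fun h => (f (x + h) - f x) / h) l ->
  filterlim f (at_left x) (locally (f x)).
Proof.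
  intros H. apply left_lim_eps. intros e He.
  destruct (H 1 ltac:(lra)) as [d [Hd K]].
  set (d' := Rmin d (e / (Rabs l + 2))).
  assert (Hd' : 0 < d') by (apply Rmin_pos; auto; apply Rdiv_lt_0_compat; auto; pose proof (Rabs_pos l); lra).
  exists d'. split; auto. intros y Hy.
  set (h := y - x). replace y with (x + h) by (unfold h; ring).
  assert (Hh : h < 0) by (unfold h; lra). assert (Habs : Rabs h < d') by (rewrite Rabs_left; unfold h; lra).
  assert (d' <= d) by (unfold d'; apply Rmin_l). specialize (K h Hh ltac:(lra)).
  replace (f (x + h) - f x) with (h * ((f (x + h) - f x) / h)) by (field; lra).
  rewrite Rabs_mult.
  assert (Rabs ((f (x + h) - f x) / h) <= Rabs l + 1).
  { replace ((f (x + h) - f x) / h) with (((f (x + h) - f x) / h - l) + l) by ring.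
    eapply Rle_trans. apply Rabs_triang. lra. }
  pose proof (Rabs_pos h). pose proof (Rabs_pos l).
  apply Rle_lt_trans with (Rabs h * (Rabs l + 1)). apply Rmult_le_compat_l; auto.
  apply Rlt_le_trans with (e / (Rabs l + 2) * (Rabs l + 2)).
  - apply Rle_lt_trans with (Rabs h * (Rabs l + 2)). nra. apply Rmult_lt_compat_r. lra. assert (Hq : d' <= e / (Rabs l + 2)) by (unfold d'; apply Rmin_r). lra.
  - right. field. lra.
Qed.

Lemma limS_morph Z (q1 q2 : R -> R) l1 l2 : (forall h, q1 h = q2 h) -> l1 = l2 -> limS Z q1 l1 -> limS Z q2 l2.
Proof. intros E El H e He. destruct (H e He) as [d [Hd K]]. exists d. split; auto. intros h Hz Hh. rewrite <- E, <- El. auto. Qed.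

Lemma limS_comb Z qa qi qb qd la li lb ld eta cmu cnu :
  limS Z qa la -> limS Z qi li -> limS Z qb lb -> limS Z qd ld ->
  limS Z (fun h => eta + (qa h - cmu * qi h) + (qb h + cnu * qd h)) (eta + (la - cmu * li) + (lb + cnu * ld)).
Proof.
  intros Ha Hi Hb Hd.
  apply limS_morph with (q1 := fun h => (eta + (qa h + (- cmu) * qi h)) + (qb h + cnu * qd h))
    (l1 := (eta + (la + (- cmu) * li)) + (lb + cnu * ld)); [intros; ring| ring|].
  apply limS_plus. apply limS_plus. apply limS_const. apply limS_plus; auto. apply limS_scal; auto.
  apply limS_plus; auto. apply limS_scal; auto.
Qed.

Lemma sum_plusR (u v : nat -> R) n : sum_n (fun k => u k + v k) n = sum_n u n + sum_n v n :> R.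
Proof. apply (sum_n_plus u v n). Qed.
Lemma sum_scalR (a : R) (u : nat -> R) n : sum_n (fun k => a * u k) n = a * sum_n u n :> R.
Proof. apply (sum_n_mult_l a u n). Qed.
Lemma sum_extR (a b : nat -> R) N : (forall n, (n <= N)%nat -> a n = b n) -> sum_n a N = sum_n b N :> R.
Proof. apply sum_n_ext_loc. Qed.
Lemma sum_minusR (u v : nat -> R) n : sum_n (fun k => u k - v k) n = sum_n u n - sum_n v n :> R.
Proof.
  unfold Rminus. rewrite sum_plusR. rewrite (sum_extR (fun k => - v k) (fun k => -1 * v k)) by (intros; ring).
  rewrite sum_scalR. ring.
Qed.
Lemma sum_SnR (a : nat -> R) n : sum_n a (S n) = sum_n a n + a (S n) :> R.
Proof. rewrite sum_Sn. reflexivity. Qed.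
Lemma sum_OR (a : nat -> R) : sum_n a 0 = a 0%nat :> R.
Proof. rewrite sum_O. reflexivity. Qed.

Lemma sum_stable (a : nat -> R) N n : (forall k, (N < k)%nat -> a k = 0) -> (N <= n)%nat -> sum_n a n = sum_n a N :> R.
Proof.
  intros H Hn. induction Hn. reflexivity. rewrite sum_SnR. rewrite IHHn. rewrite H by lia. ring.
Qed.

Lemma Series_fin (a : nat -> R) N : (forall k, (N < k)%nat -> a k = 0) -> Series a = sum_n a N.
Proof.
  intros H. unfold Series.
  rewrite (Lim_seq_ext_loc _ (fun _ => sum_n a N)).
  - rewrite Lim_seq_const. reflexivity.
  - exists N. intros n Hn. apply (sum_stable a N n H Hn).
Qed.

Lemma sum_zero (a : nat -> R) N : (forall k, (k <= N)%nat -> a k = 0) -> sum_n a N = 0 :> R.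
Proof.
  intros H. induction N. rewrite sum_OR; auto. rewrite sum_SnR, IHN, H; [ring| lia| intros; apply H; lia].
Qed.

Lemma sum_single (a : nat -> R) N m : (m <= N)%nat -> (forall k, (k <= N)%nat -> k <> m -> a k = 0) -> sum_n a N = a m :> R.
Proof.
  intros Hm H. induction N.
  - rewrite sum_OR. replace m with 0%nat by lia. auto.
  - destruct (Nat.eq_dec m (S N)).
    + subst. rewrite sum_SnR. rewrite sum_zero; [ring|]. intros; apply H; lia.
    + rewrite sum_SnR. rewrite IHN; [| lia| intros; apply H; lia]. rewrite (H (S N)); auto; ring.
Qed.

Lemma ex_RInt_sum (f : nat -> R -> R) a b N : (forall k, (k <= N)%nat -> ex_RInt (f k) a b) ->
  ex_RInt (fun u => sum_n (fun k => f k u) N) a b.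
Proof.
  intros H. induction N.
  - apply ex_RInt_ext with (f 0%nat). { intros x _. rewrite sum_OR. reflexivity. } apply H. lia.
  - apply ex_RInt_ext with (fun u => sum_n (fun k => f k u) N + f (S N) u).
    { intros x _. rewrite sum_SnR. reflexivity. }
    apply ex_RInt_plusR. { apply IHN. intros; apply H; lia. } apply H; lia.
Qed.

Lemma RInt_sum (f : nat -> R -> R) a b N : (forall k, (k <= N)%nat -> ex_RInt (f k) a b) ->
  RInt (fun u => sum_n (fun k => f k u) N) a b = sum_n (fun k => RInt (f k) a b) N :> R.
Proof.
  intros H. induction N.
  - rewrite sum_OR. apply RInt_extR. intros x _. rewrite sum_OR. reflexivity.
  - rewrite sum_SnR. rewrite (RInt_extR _ (fun u => sum_n (fun k => f k u) N + f (S N) u)).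
    2:{ intros x _. rewrite sum_SnR. reflexivity. }
    rewrite RInt_plusR.
    + rewrite IHN. reflexivity. intros; apply H; lia.
    + apply ex_RInt_sum. intros; apply H; lia.
    + apply H; lia.
Qed.

Section Tseq.
Variable T : nat -> R.
Hypothesis HT : forall n, T n < T (S n).
Hypothesis HTu : forall M, exists n, M < T n.

Lemma T_lt n m : (n < m)%nat -> T n < T m.
Proof. intros H. induction H. apply HT. specialize (HT m). lra. Qed.

Lemma T_le n m : (n <= m)%nat -> T n <= T m.
Proof. intros H. destruct (Nat.eq_dec n m). subst; lra. left; apply T_lt; lia. Qed.

Lemma T_inj n m : T n = T m -> n = m.
Proof.
  intros E. destruct (Nat.lt_trichotomy n m) as [H|[H|H]]; auto.
  pose proof (T_lt _ _ H); lra. pose proof (T_lt _ _ H); lra.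
Qed.

Lemma T_bound M : exists N, forall k, (N < k)%nat -> M < T k.
Proof.
  destruct (HTu M) as [n Hn]. exists n. intros k Hk. pose proof (T_lt _ _ Hk). lra.
Qed.

End Tseq.

Lemma within_eps (f : R -> R) a b u : a <= u <= b ->
  filterlim f (within (fun v => a <= v <= b) (locally u)) (locally (f u)) ->
  forall e, 0 < e -> exists d, 0 < d /\ forall y, a <= y <= b -> Rabs (y - u) < d -> Rabs (f y - f u) < e.
Proof.
  intros Hu H e He. pose proof (proj1 (filterlim_locally _ (f u)) H (mkposreal e He)) as Hd0.
  destruct Hd0 as [d Hd]. exists d. split. apply cond_pos. intros y Hy Hyu.
  assert (B : ball (f u) e (f y)). { apply Hd. apply ball_R. exact Hyu. exact Hy. }
  apply ball_R in B. exact B.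
Qed.

Section Nu.
Variables (f : R -> R) (q : R).
Hypothesis Hq : 0 <= q.
Hypothesis Hf : forall u, -q <= u <= 0 -> filterlim f (within (fun v => -q <= v <= 0) (locally u)) (locally (f u)).

Lemma f_cadlag : cadlag f (-q) 0.
Proof. apply cadlag_within. exact Hf. Qed.

Definition cl x := clamp (-q) 0 x.

Lemma cl_low x : x <= -q -> cl x = -q.
Proof. intros. unfold cl, clamp, Rmax, Rmin. repeat destruct Rle_dec; lra. Qed.
Lemma cl_high x : 0 <= x -> cl x = 0.
Proof. intros. unfold cl, clamp, Rmax, Rmin. repeat destruct Rle_dec; lra. Qed.
Lemma cl_mid x : -q <= x <= 0 -> cl x = x.
Proof. intros. unfold cl, clamp, Rmax, Rmin. repeat destruct Rle_dec; lra. Qed.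

Definition Lr b := if Rlt_dec (-q) b then if Rle_dec b 0 then f b else 0 else 0.
Definition Ll b := if Rle_dec (-q) b then if Rlt_dec b 0 then f b else 0 else 0.

Lemma QKr b : limS Spos (fun h => RInt f (cl (b - h)) (cl b) / h) (Lr b).
Proof.
  unfold Lr. destruct (Rlt_dec (-q) b) as [Hb1|Hb1]; [destruct (Rle_dec b 0) as [Hb2|Hb2]|].
  - intros e He.
    destruct (within_eps f (-q) 0 b ltac:(lra) (Hf b ltac:(lra)) (e/2) ltac:(lra)) as [d [Hd K]].
    exists (Rmin d (b + q)). split. { apply Rmin_pos; lra. }
    intros h Hh Hhd. unfold Spos in Hh. pose proof (Rmin_l d (b + q)). pose proof (Rmin_r d (b + q)).
    rewrite Rabs_right in Hhd by lra.
    rewrite cl_mid by lra. rewrite cl_mid by lra.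
    rewrite RInt_swapR by (apply (exX f (-q) 0 f_cadlag); lra).
    replace (- RInt f b (b - h) / h) with (RInt f b (b + - h) / - h) by (replace (b + - h) with (b - h) by ring; field; lra).
    eapply Rle_lt_trans. apply (avg_bound f (-q) 0 f_cadlag b (- h) (e/2)); try lra.
    intros y Hy. rewrite Rmin_right, Rmax_left in Hy by lra. left. apply K. lra. apply Rabs_lt_between'. lra.
    lra.
  - intros e He. exists b. split. lra. intros h Hh Hhd. unfold Spos in Hh.
    rewrite Rabs_right in Hhd by lra.
    rewrite cl_high by lra. rewrite cl_high by lra. rewrite RInt_pointR. unfold Rdiv. rewrite Rmult_0_l, Rminus_diag, Rabs_R0. lra.
  - intros e He. exists 1. split. lra. intros h Hh Hhd. unfold Spos in Hh.
    rewrite cl_low by lra. rewrite cl_low by lra. rewrite RInt_pointR. unfold Rdiv. rewrite Rmult_0_l, Rminus_diag, Rabs_R0. lra.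
Qed.

Lemma QKl b : limS Sneg (fun h => RInt f (cl (b - h)) (cl b) / h) (Ll b).
Proof.
  unfold Ll. destruct (Rle_dec (-q) b) as [Hb1|Hb1]; [destruct (Rlt_dec b 0) as [Hb2|Hb2]|].
  - intros e He.
    destruct (within_eps f (-q) 0 b ltac:(lra) (Hf b ltac:(lra)) (e/2) ltac:(lra)) as [d [Hd K]].
    exists (Rmin d (- b)). split. { apply Rmin_pos; lra. }
    intros h Hh Hhd. unfold Sneg in Hh. pose proof (Rmin_l d (- b)). pose proof (Rmin_r d (- b)).
    rewrite Rabs_left in Hhd by lra.
    rewrite cl_mid by lra. rewrite cl_mid by lra.
    rewrite RInt_swapR by (apply (exX f (-q) 0 f_cadlag); lra).
    replace (- RInt f b (b - h) / h) with (RInt f b (b + - h) / - h) by (replace (b + - h) with (b - h) by ring; field; lra).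
    eapply Rle_lt_trans. apply (avg_bound f (-q) 0 f_cadlag b (- h) (e/2)); try lra.
    intros y Hy. rewrite Rmin_left, Rmax_right in Hy by lra. left. apply K. lra. apply Rabs_lt_between'. lra.
    lra.
  - intros e He. exists 1. split. lra. intros h Hh Hhd. unfold Sneg in Hh.
    rewrite cl_high by lra. rewrite cl_high by lra. rewrite RInt_pointR. unfold Rdiv. rewrite Rmult_0_l, Rminus_diag, Rabs_R0. lra.
  - intros e He. exists (- q - b). split. lra. intros h Hh Hhd. unfold Sneg in Hh.
    rewrite Rabs_left in Hhd by lra.
    rewrite cl_low by lra. rewrite cl_low by lra. rewrite RInt_pointR. unfold Rdiv. rewrite Rmult_0_l, Rminus_diag, Rabs_R0. lra.
Qed.

End Nu.

Lemma lim_plus {T0 : Type} {F : (T0 -> Prop) -> Prop} {FF : Filter F} (f g : T0 -> R) a b :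
  filterlim f F (locally a) -> filterlim g F (locally b) -> filterlim (fun x => f x + g x) F (locally (a + b)).
Proof. intros Hf Hg. eapply filterlim_comp_2; [exact Hf| exact Hg| apply (filterlim_plus a b)]. Qed.

Lemma lim_mult {T0 : Type} {F : (T0 -> Prop) -> Prop} {FF : Filter F} (f g : T0 -> R) a b :
  filterlim f F (locally a) -> filterlim g F (locally b) -> filterlim (fun x => f x * g x) F (locally (a * b)).
Proof. intros Hf Hg. eapply filterlim_comp_2; [exact Hf| exact Hg| apply (filterlim_mult a b)]. Qed.

Lemma lim_minus {T0 : Type} {F : (T0 -> Prop) -> Prop} {FF : Filter F} (f g : T0 -> R) a b :
  filterlim f F (locally a) -> filterlim g F (locally b) -> filterlim (fun x => f x - g x) F (locally (a - b)).
Proof.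
  intros Hf Hg. replace (a - b) with (a + (-1) * b) by ring.
  apply filterlim_ext with (f := fun x => f x + (-1) * g x). intros; ring.
  apply lim_plus; auto. eapply filterlim_comp_2; [apply filterlim_const| exact Hg| apply (filterlim_mult (-1) b)].
Qed.

Lemma lim_const {T0 : Type} {F : (T0 -> Prop) -> Prop} {FF : Filter F} (a : R) :
  filterlim (fun _ : T0 => a) F (locally a).
Proof. apply filterlim_const. Qed.

Lemma Series_zero (a : nat -> R) : (forall k, a k = 0) -> Series a = 0.
Proof. intros H. rewrite (Series_fin a 0). rewrite sum_OR. apply H. intros; apply H. Qed.

Lemma gap_left (T : nat -> R) t N : exists d, 0 < d /\ forall k, (k <= N)%nat -> ~ (t - d < T k < t).
Proof.
  induction N.
  - destruct (Rlt_dec (T 0%nat) t).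
    + exists (t - T 0%nat). split. lra. intros k Hk. replace k with 0%nat by lia. lra.
    + exists 1. split. lra. intros k Hk. replace k with 0%nat by lia. lra.
  - destruct IHN as [d [Hd H]].
    destruct (Rlt_dec (T (S N)) t).
    + exists (Rmin d (t - T (S N))). split. apply Rmin_pos; lra.
      intros k Hk. pose proof (Rmin_l d (t - T (S N))). pose proof (Rmin_r d (t - T (S N))).
      destruct (Nat.eq_dec k (S N)). { subst. lra. } specialize (H k ltac:(lia)). lra.
    + exists d. split. lra. intros k Hk.
      destruct (Nat.eq_dec k (S N)). { subst. lra. } apply H. lia.
Qed.

Lemma unique_right t (f : R -> R) a b : filterlim f (at_right t) (locally a) -> filterlim f (at_right t) (locally b) -> a = b.
Proof.
  intros Ha Hb. apply NNPP. intro Hab.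
  assert (He : 0 < Rabs (a - b) / 2) by (apply Rdiv_lt_0_compat; [apply Rabs_pos_lt; lra| lra]).
  destruct (proj1 (right_lim_eps f t a) Ha _ He) as [d1 [Hd1 K1]].
  destruct (proj1 (right_lim_eps f t b) Hb _ He) as [d2 [Hd2 K2]].
  set (y := t + Rmin d1 d2 / 2).
  assert (Hm : 0 < Rmin d1 d2) by (apply Rmin_pos; auto).
  pose proof (Rmin_l d1 d2). pose proof (Rmin_r d1 d2).
  specialize (K1 y ltac:(unfold y; lra)). specialize (K2 y ltac:(unfold y; lra)).
  assert (Rabs (a - b) <= Rabs (f y - a) + Rabs (f y - b)).
  { replace (a - b) with (- (f y - a) + (f y - b)) by ring. eapply Rle_trans. apply Rabs_triang. rewrite Rabs_Ropp. lra. }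
  lra.
Qed.

Lemma ode (X : R -> R) a b eta cmu : 0 < cmu -> a < b ->
  filterlim X (at_right a) (locally (X a)) ->
  (forall s, a < s < b -> is_derive X s (eta - cmu * X s)) ->
  forall t, a < t < b -> X t = eta / cmu + (X a - eta / cmu) * exp (- cmu * (t - a)).
Proof.
  intros Hc Hab HXa HD t Ht.
  set (Y := fun s => (X s - eta / cmu) * exp (cmu * (s - a))).
  assert (HE : forall s, is_derive (fun s => exp (cmu * (s - a))) s (cmu * exp (cmu * (s - a)))).
  { intros s. auto_derive. auto. rewrite Rmult_1_r. reflexivity. }
  assert (HY : forall s, a < s < b -> is_derive Y s 0).
  { intros s Hs. apply is_derive_Reals.
    assert (H1 : derivable_pt_lim (fun s => X s - eta / cmu) s (eta - cmu * X s - 0)).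
    { apply (derivable_pt_lim_minus X (fct_cte (eta / cmu))). apply is_derive_Reals. apply HD; auto.
      apply derivable_pt_lim_const. }
    assert (H2 : derivable_pt_lim (fun s => exp (cmu * (s - a))) s (cmu * exp (cmu * (s - a)))).
    { apply is_derive_Reals. apply HE. }
    pose proof (derivable_pt_lim_mult _ _ s _ _ H1 H2) as H3.
    replace 0 with ((eta - cmu * X s - 0) * exp (cmu * (s - a)) + (X s - eta / cmu) * (cmu * exp (cmu * (s - a)))) by (field; lra).
    exact H3. }
  assert (Hconst : forall s1 s2, a < s1 <= s2 -> s2 < b -> Y s1 = Y s2).
  { intros s1 s2 H1 H2.
    pose proof (is_RInt_derive Y (fun _ => 0) s1 s2) as HI.
    assert (HI' : is_RInt (fun _ => 0) s1 s2 (minus (Y s2) (Y s1))).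
    { apply HI.
      - intros x Hx. rewrite Rmin_left, Rmax_right in Hx by lra. apply HY. lra.
      - intros x _. apply continuous_const. }
    apply (is_RInt_unique (V := R_CompleteNormedModule)) in HI'. rewrite RInt_constR in HI'.
    unfold minus, plus, opp in HI'. simpl in HI'. lra. }
  assert (HlimY : filterlim Y (at_right a) (locally ((X a - eta / cmu) * exp (cmu * (a - a))))).
  { unfold Y. apply lim_mult. apply lim_minus. exact HXa. apply lim_const.
    pose proof (ex_derive_continuous (fun s => exp (cmu * (s - a))) a (ex_intro _ _ (HE a))) as Hc'.
    eapply filterlim_filter_le_1; [apply filter_le_within| exact Hc']. }
  assert (HlimY2 : filterlim Y (at_right a) (locally (Y t))).
  { apply filterlim_ext_loc with (f := fun _ => Y t).
    - exists (mkposreal (t - a) ltac:(lra)). intros y Hy Hya. simpl in Hy. apply ball_R in Hy.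
      apply Rabs_lt_between' in Hy. symmetry. apply Hconst; lra.
    - apply lim_const. }
  pose proof (unique_right a Y _ _ HlimY HlimY2) as E.
  replace (a - a) with 0 in E by ring. rewrite Rmult_0_r, exp_0, Rmult_1_r in E.
  unfold Y in E.
  assert (Hexp : exp (cmu * (t - a)) * exp (- cmu * (t - a)) = 1).
  { rewrite <- exp_plus. replace (cmu * (t - a) + - cmu * (t - a)) with 0 by ring. apply exp_0. }
  rewrite E. 
  replace ((X t - eta / cmu) * exp (cmu * (t - a)) * exp (- cmu * (t - a))) with ((X t - eta / cmu) * (exp (cmu * (t - a)) * exp (- cmu * (t - a)))) by ring.
  rewrite Hexp. ring.
Qed.

Section Main.
Variables (p q eta cmu cnu gam : R) (fmu fnu : R -> R) (T J : nat -> R) (X Xm : R -> R).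
Hypothesis Hp : 0 <= p.
Hypothesis Hq : 0 <= q.
Hypothesis Heta : 0 < eta.
Hypothesis Hcmu : 0 < cmu.
Hypothesis Hcnu : 0 < cnu.
Hypothesis Hfmu0 : forall u, - p <= u <= 0 -> 0 <= fmu u.
Hypothesis Hfmu : forall u, - p <= u <= 0 ->
     filterlim fmu (within (fun v => - p <= v <= 0) (locally u)) (locally (fmu u)).
Hypothesis Hfnu0 : forall u, - q <= u <= 0 -> 0 <= fnu u.
Hypothesis Hfnu : forall u, - q <= u <= 0 ->
     filterlim fnu (within (fun v => - q <= v <= 0) (locally u)) (locally (fnu u)).
Hypothesis HT : forall n, T n < T (Datatypes.S n).
Hypothesis HT0 : - Rmax p q < T 0%nat.
Hypothesis HTu : forall M, exists n, M < T n.
Hypothesis HJ : forall n, J n <> 0.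
Hypothesis HXr : forall t, - Rmax p q <= t -> filterlim X (at_right t) (locally (X t)).
Hypothesis HXl : forall t, - Rmax p q < t -> left_lim X t (Xm t).
Hypothesis Heq : forall t, 0 < t -> cdgarch_eq p q eta cmu cnu fmu fnu T J X Xm t.

Let r := Rmax p q.

Lemma r_p : p <= r. Proof. apply Rmax_l. Qed.
Lemma r_q : q <= r. Proof. apply Rmax_r. Qed.

Lemma X_cadlag M : cadlag X (-r) M.
Proof.
  split.
  - intros x Hx. apply HXr. unfold r in Hx. lra.
  - intros x Hx. exists (Xm x). apply HXl. unfold r in Hx. lra.
Qed.

Lemma X_bound M : -r <= M -> exists B, 0 <= B /\ forall x, -r <= x <= M -> Rabs (X x) <= B.
Proof.
  intros HM. destruct (cadlag_bounded X (-r) M HM (X_cadlag M)) as [B HB].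
  exists B. split; auto. pose proof (HB M ltac:(lra)). pose proof (Rabs_pos (X M)). lra.
Qed.

Lemma fmu_cadlag : cadlag fmu (-p) 0.
Proof. apply cadlag_within. exact Hfmu. Qed.

Lemma fmu_bound : exists W, forall u, -p <= u <= 0 -> 0 <= fmu u <= W.
Proof.
  destruct (cadlag_bounded fmu (-p) 0 ltac:(lra) fmu_cadlag) as [W HW].
  exists W. intros u Hu. split. apply Hfmu0; auto. pose proof (HW u Hu). apply Rabs_le_between in H. lra.
Qed.

Definition ck k := Xm (T k) * J k ^ 2.

Definition Afun t := RInt (fun u => fmu u * RInt X u (t + u)) (- p) 0.
Definition Gfun t := RInt (fun u => fmu u * X (t + u)) (- p) 0.
Definition Ifun t := RInt X 0 t.
Definition Bfun t := RInt (fun u => fnu u * dS_int T J Xm u (t + u)) (- q) 0.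
Definition Dfun t := dS_int T J Xm 0 t.
Definition RHS t := X 0 + eta * t + (Afun t - cmu * Ifun t) + (Bfun t + cnu * Dfun t).

Lemma dS_empty a : dS_int T J Xm a a = 0.
Proof. unfold dS_int. apply Series_zero. intros k. destruct (Rlt_dec a (T k)); auto. destruct (Rle_dec (T k) a); auto. lra. Qed.

Lemma eq_RHS t : 0 <= t -> X t = RHS t.
Proof.
  intros Ht. destruct (Req_dec t 0) as [E|N].
  - subst. unfold RHS, Afun, Ifun, Bfun, Dfun.
    rewrite (RInt_extR _ (fun _ => 0)).
    2:{ intros u _. rewrite Rplus_0_l. rewrite RInt_pointR. ring. }
    rewrite (RInt_extR (fun u => fnu u * dS_int T J Xm u (0 + u)) (fun _ => 0)).
    2:{ intros u _. rewrite Rplus_0_l. rewrite dS_empty. ring. }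
    rewrite !RInt_constR. rewrite RInt_pointR. rewrite dS_empty. ring.
  - specialize (Heq t ltac:(lra)). unfold cdgarch_eq in Heq. rewrite Heq. unfold RHS, Afun, Ifun, Bfun, Dfun. ring.
Qed.

Lemma dS_fin N Mb : (forall k, (N < k)%nat -> Mb < T k) -> forall x y, y <= Mb ->
  dS_int T J Xm x y = sum_n (fun k => if Rlt_dec x (T k) then if Rle_dec (T k) y then ck k else 0 else 0) N.
Proof.
  intros HN x y Hy. unfold dS_int. apply Series_fin. intros k Hk. specialize (HN k Hk).
  destruct (Rlt_dec x (T k)); auto. destruct (Rle_dec (T k) y); auto. lra.
Qed.

Lemma D_const t s : 0 <= t <= s -> (forall k, ~ (t < T k <= s)) -> Dfun s = Dfun t.
Proof.
  intros Hts H. unfold Dfun, dS_int. apply Series_ext. intros k. specialize (H k).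
  destruct (Rlt_dec 0 (T k)); auto. destruct (Rle_dec (T k) s); destruct (Rle_dec (T k) t); auto; lra.
Qed.

Lemma fnu_cadlag : cadlag fnu (-q) 0.
Proof. apply cadlag_within. exact Hfnu. Qed.

Lemma Bfun_struct N Mb s : (forall k, (N < k)%nat -> Mb < T k) -> 0 <= s <= Mb ->
  Bfun s = sum_n (fun k => ck k * RInt fnu (cl q (T k - s)) (cl q (T k))) N.
Proof.
  intros HN Hs. unfold Bfun.
  rewrite (RInt_extR _ (fun u => sum_n (fun k => ck k * (fnu u * ind (T k - s) (T k) u)) N)).
  2:{ intros u Hu. rewrite Rmin_left in Hu by lra. rewrite Rmax_right in Hu by lra.
      rewrite (dS_fin N Mb HN u (s + u)) by lra.
      rewrite <- sum_scalR. apply sum_extR. intros k _. unfold ind.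
      destruct (Rlt_dec u (T k)); destruct (Rle_dec (T k) (s + u)); destruct (Rle_dec (T k - s) u);
        try destruct (Rlt_dec u (T k)); try lra. }
  rewrite RInt_sum.
  2:{ intros k _. apply ex_RInt_scalR. apply cadlag_ex_RInt. lra. apply cadlag_mult. apply fnu_cadlag. apply cadlag_ind. }
  apply sum_extR. intros k _. rewrite RInt_scalR.
  2:{ apply cadlag_ex_RInt. lra. apply cadlag_mult. apply fnu_cadlag. apply cadlag_ind. }
  rewrite RInt_ind; [reflexivity| lra| lra| apply fnu_cadlag].
Qed.

Lemma cl_in x : -q <= cl q x <= 0.
Proof. unfold cl. apply clamp_bounds. lra. Qed.

Lemma exfnu x y : ex_RInt fnu (cl q x) (cl q y).
Proof. pose proof (cl_in x). pose proof (cl_in y). apply (exX fnu (-q) 0 fnu_cadlag); lra. Qed.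

Lemma Bfun_quot N Mb t h : (forall k, (N < k)%nat -> Mb < T k) -> 0 <= t <= Mb -> 0 <= t + h <= Mb -> h <> 0 ->
  (Bfun (t + h) - Bfun t) / h = sum_n (fun k => ck k * (RInt fnu (cl q (T k - t - h)) (cl q (T k - t)) / h)) N.
Proof.
  intros HN Ht Hth Hh. rewrite (Bfun_struct N Mb (t + h)), (Bfun_struct N Mb t) by auto.
  rewrite <- sum_minusR. unfold Rdiv. rewrite Rmult_comm. rewrite <- sum_scalR.
  apply sum_extR. intros k _.
  replace (T k - (t + h)) with (T k - t - h) by ring.
  rewrite <- (RInt_ChaslesR fnu (cl q (T k - t - h)) (cl q (T k - t)) (cl q (T k))) by apply exfnu.
  field. auto.
Qed.

Definition BLr t N := sum_n (fun k => ck k * Lr fnu q (T k - t)) N.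
Definition BLl t N := sum_n (fun k => ck k * Ll fnu q (T k - t)) N.

Lemma Bfun_right N Mb t : (forall k, (N < k)%nat -> Mb < T k) -> 0 <= t < Mb ->
  limS Spos (fun h => (Bfun (t + h) - Bfun t) / h) (BLr t N).
Proof.
  intros HN Ht. unfold BLr.
  apply limS_ext with (q1 := fun h => sum_n (fun k => ck k * (RInt fnu (cl q (T k - t - h)) (cl q (T k - t)) / h)) N) (d0 := Mb - t).
  lra. intros h Hh Hhd. unfold Spos in Hh. rewrite Rabs_right in Hhd by lra.
  symmetry. apply (Bfun_quot N Mb); [exact HN| lra| lra| lra].
  apply limS_sum. intros k _. apply limS_scal.
  apply limS_ext with (q1 := fun h => RInt fnu (cl q ((T k - t) - h)) (cl q (T k - t)) / h) (d0 := 1). lra.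
  intros; reflexivity.
  apply QKr; auto.
Qed.

Lemma Bfun_left N Mb t : (forall k, (N < k)%nat -> Mb < T k) -> 0 < t <= Mb ->
  limS Sneg (fun h => (Bfun (t + h) - Bfun t) / h) (BLl t N).
Proof.
  intros HN Ht. unfold BLl.
  apply limS_ext with (q1 := fun h => sum_n (fun k => ck k * (RInt fnu (cl q (T k - t - h)) (cl q (T k - t)) / h)) N) (d0 := t).
  lra. intros h Hh Hhd. unfold Sneg in Hh. rewrite Rabs_left in Hhd by lra.
  symmetry. apply (Bfun_quot N Mb); [exact HN| lra| lra| lra].
  apply limS_sum. intros k _. apply limS_scal.
  apply limS_ext with (q1 := fun h => RInt fnu (cl q ((T k - t) - h)) (cl q (T k - t)) / h) (d0 := 1). lra.
  intros; reflexivity.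
  apply QKl; auto.
Qed.

Definition xiS t := Series (fun k => if Rlt_dec (t - q) (T k) then
                       if Rle_dec (T k) t then fnu (T k - t) * Xm (T k) * (J k) ^ 2 else 0
                     else 0).

Lemma xi_split t : xi p q fmu fnu T J X Xm t = Gfun t + xiS t.
Proof. reflexivity. Qed.

Lemma xiS_fin N Mb t : (forall k, (N < k)%nat -> Mb < T k) -> t <= Mb -> xiS t = BLr t N.
Proof.
  intros HN Ht. unfold xiS, BLr. rewrite (Series_fin _ N).
  - apply sum_extR. intros k _. unfold Lr, ck.
    destruct (Rlt_dec (t - q) (T k)); destruct (Rle_dec (T k) t); destruct (Rlt_dec (- q) (T k - t));
      try destruct (Rle_dec (T k - t) 0); try lra; ring.
  - intros k Hk. specialize (HN k Hk). destruct (Rlt_dec (t - q) (T k)); auto. destruct (Rle_dec (T k) t); auto. lra.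
Qed.

Lemma A_right t : 0 <= t -> limS Spos (fun h => (Afun (t + h) - Afun t) / h) (Gfun t).
Proof.
  intros Ht e He. destruct fmu_bound as [W HW].
  destruct (Ac_deriv X fmu (-r) (t + 1) p W (X_cadlag _) Hp ltac:(pose proof r_p; lra) fmu_cadlag HW t ltac:(lra) e He) as [d [Hd K]].
  exists (Rmin d 1). split. apply Rmin_pos; lra. intros h Hh Hhd. unfold Spos in Hh.
  pose proof (Rmin_l d 1). pose proof (Rmin_r d 1). rewrite Rabs_right in Hhd by lra.
  apply K; try lra. rewrite Rabs_right; lra.
Qed.

Lemma A_left t : 0 < t -> limS Sneg (fun h => (Afun (t + h) - Afun t) / h) (Gfun t).
Proof.
  intros Ht e He. destruct fmu_bound as [W HW].
  destruct (Ac_deriv X fmu (-r) (t + 1) p W (X_cadlag _) Hp ltac:(pose proof r_p; lra) fmu_cadlag HW t ltac:(lra) e He) as [d [Hd K]].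
  exists (Rmin d t). split. apply Rmin_pos; lra. intros h Hh Hhd. unfold Sneg in Hh.
  pose proof (Rmin_l d t). pose proof (Rmin_r d t). rewrite Rabs_left in Hhd by lra.
  apply K; try lra. rewrite Rabs_left; lra.
Qed.

Lemma I_quot t h : 0 <= t -> 0 <= t + h -> Ifun (t + h) - Ifun t = RInt X t (t + h).
Proof.
  intros Ht Hth. unfold Ifun. pose proof r_p. pose proof r_q.
  pose proof (Rmax_l t (t + h)). pose proof (Rmax_r t (t + h)).
  set (M := Rmax t (t + h)).
  rewrite (RInt_I0 X (-r) M (X_cadlag M) 0 (t + h)) by (unfold M in *; lra).
  rewrite (RInt_I0 X (-r) M (X_cadlag M) 0 t) by (unfold M in *; lra).
  rewrite (RInt_I0 X (-r) M (X_cadlag M) t (t + h)) by (unfold M in *; lra). ring.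
Qed.

Lemma I_right t : 0 <= t -> limS Spos (fun h => (Ifun (t + h) - Ifun t) / h) (X t).
Proof.
  intros Ht e He. pose proof r_p. pose proof r_q.
  destruct (proj1 (right_lim_eps X t (X t)) (HXr t ltac:(unfold r in *; lra)) (e/2) ltac:(lra)) as [d [Hd K]].
  exists (Rmin d 1). split. apply Rmin_pos; lra. intros h Hh Hhd. unfold Spos in Hh.
  pose proof (Rmin_l d 1). pose proof (Rmin_r d 1). rewrite Rabs_right in Hhd by lra.
  rewrite I_quot by lra.
  eapply Rle_lt_trans. apply (avg_bound X (-r) (t + 1) (X_cadlag _) t h (e/2)); try lra.
  - intros y Hy. rewrite Rmin_left, Rmax_right in Hy by lra.
    destruct (Req_dec y t). { subst. rewrite Rminus_diag, Rabs_R0. lra. } left. apply K. lra.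
  - lra.
Qed.

Lemma I_left t : 0 < t -> filterlim X (at_left t) (locally (X t)) ->
  limS Sneg (fun h => (Ifun (t + h) - Ifun t) / h) (X t).
Proof.
  intros Ht HL e He. pose proof r_p. pose proof r_q.
  destruct (proj1 (left_lim_eps X t (X t)) HL (e/2) ltac:(lra)) as [d [Hd K]].
  exists (Rmin d t). split. apply Rmin_pos; lra. intros h Hh Hhd. unfold Sneg in Hh.
  pose proof (Rmin_l d t). pose proof (Rmin_r d t). rewrite Rabs_left in Hhd by lra.
  rewrite I_quot by lra.
  eapply Rle_lt_trans. apply (avg_bound X (-r) (t + 1) (X_cadlag _) t h (e/2)); try lra.
  - intros y Hy. rewrite Rmin_right, Rmax_left in Hy by lra.
    destruct (Req_dec y t). { subst. rewrite Rminus_diag, Rabs_R0. lra. } left. apply K. lra.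
  - lra.
Qed.

Lemma I_leftcont t : 0 < t -> filterlim Ifun (at_left t) (locally (Ifun t)).
Proof.
  intros Ht. pose proof r_p. pose proof r_q.
  destruct (X_bound t ltac:(unfold r in *; lra)) as [B [HB0 HB]].
  apply left_lim_eps. intros e He. exists (Rmin t (e / (B + 1))). split.
  { apply Rmin_pos. lra. apply Rdiv_lt_0_compat; lra. }
  intros y Hy. pose proof (Rmin_l t (e / (B + 1))). pose proof (Rmin_r t (e / (B + 1))).
  replace y with (t + (y - t)) by ring. rewrite I_quot by lra. replace (t + (y - t)) with y by ring.
  eapply Rle_lt_trans. apply (RInt_X_bound X (-r) t B (X_cadlag t) HB); lra.
  rewrite Rabs_left by lra.
  apply Rle_lt_trans with ((B + 1) * (t - y)). nra.
  apply Rlt_le_trans with ((B + 1) * (e / (B + 1))). apply Rmult_lt_compat_l; lra. right; field; lra.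
Qed.

Lemma RHS_quot t h : h <> 0 ->
  (RHS (t + h) - RHS t) / h = eta + ((Afun (t + h) - Afun t) / h - cmu * ((Ifun (t + h) - Ifun t) / h))
     + ((Bfun (t + h) - Bfun t) / h + cnu * ((Dfun (t + h) - Dfun t) / h)).
Proof. intros Hh. unfold RHS. field. auto. Qed.

Lemma X_right N t d0 : (forall k, (N < k)%nat -> t + 1 < T k) -> 0 <= t -> 0 < d0 ->
  (forall k, ~ (t < T k < t + d0)) ->
  limS Spos (fun h => (X (t + h) - X t) / h) (eta + (Gfun t - cmu * X t) + (BLr t N + cnu * 0)).
Proof.
  intros HN Ht Hd0 Hgap.
  apply limS_ext with (q1 := fun h => (RHS (t + h) - RHS t) / h) (d0 := d0).
  - lra.
  - intros h Hh Hhd. unfold Spos in Hh. rewrite Rabs_right in Hhd by lra.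
    rewrite <- !eq_RHS by lra. reflexivity.
  - apply limS_ext with (q1 := fun h => eta + ((Afun (t + h) - Afun t) / h - cmu * ((Ifun (t + h) - Ifun t) / h))
       + ((Bfun (t + h) - Bfun t) / h + cnu * ((Dfun (t + h) - Dfun t) / h))) (d0 := 1).
    + lra.
    + intros h Hh _. unfold Spos in Hh. rewrite RHS_quot; auto. lra.
    + apply limS_comb.
      * apply A_right; auto.
      * apply I_right; auto.
      * apply (Bfun_right N (t + 1)); auto; lra.
      * apply limS_ext with (q1 := fun _ => 0) (d0 := d0). lra.
        intros h Hh Hhd. unfold Spos in Hh. rewrite Rabs_right in Hhd by lra.
        rewrite (D_const t (t + h)). unfold Rdiv; ring. lra.
        intros k Hk. apply (Hgap k). split; [lra|]. lra.
        apply limS_const.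
Qed.

Lemma lim_id_left t : filterlim (fun s : R => s) (at_left t) (locally t).
Proof. apply left_lim_eps. intros e He. exists e. split; auto. intros y Hy. rewrite Rabs_left; lra. Qed.

Lemma unique_left t (f : R -> R) a b : filterlim f (at_left t) (locally a) -> filterlim f (at_left t) (locally b) -> a = b.
Proof.
  intros Ha Hb. apply NNPP. intro Hab.
  assert (He : 0 < Rabs (a - b) / 2) by (apply Rdiv_lt_0_compat; [apply Rabs_pos_lt; lra| lra]).
  destruct (proj1 (left_lim_eps f t a) Ha _ He) as [d1 [Hd1 K1]].
  destruct (proj1 (left_lim_eps f t b) Hb _ He) as [d2 [Hd2 K2]].
  set (y := t - Rmin d1 d2 / 2).
  assert (Hm : 0 < Rmin d1 d2) by (apply Rmin_pos; auto).
  pose proof (Rmin_l d1 d2). pose proof (Rmin_r d1 d2).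
  specialize (K1 y ltac:(unfold y; lra)). specialize (K2 y ltac:(unfold y; lra)).
  assert (Rabs (a - b) <= Rabs (f y - a) + Rabs (f y - b)).
  { replace (a - b) with (- (f y - a) + (f y - b)) by ring. eapply Rle_trans. apply Rabs_triang. rewrite Rabs_Ropp. lra. }
  lra.
Qed.

Definition jk t N (a : nat -> R) : R := sum_n (fun k => if Req_EM_T (T k) t then a k else 0) N.

Lemma diff_term t d s k (a : R) : t - d < s < t -> ~ (t - d < T k < t) ->
  (if Rle_dec (T k) t then a else 0) - (if Rle_dec (T k) s then a else 0) = if Req_EM_T (T k) t then a else 0.
Proof.
  intros Hs Hk. destruct (Rle_dec (T k) t); destruct (Rle_dec (T k) s); destruct (Req_EM_T (T k) t); try lra;
  exfalso; apply Hk; split; lra.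
Qed.

Lemma gap_all t : exists d, 0 < d /\ forall k, ~ (t - d < T k < t).
Proof.
  destruct (T_bound T HT HTu (t + 1)) as [N HN].
  destruct (gap_left T t N) as [d [Hd H]]. exists d. split; auto. intros k.
  destruct (Compare_dec.le_lt_dec k N) as [l|l]. apply H; auto. specialize (HN k l). lra.
Qed.

Lemma jk_sq t N : (forall k, (N < k)%nat -> t + 1 < T k) ->
  (jk t N J) ^ 2 = jk t N (fun k => J k ^ 2).
Proof.
  intros HN. unfold jk.
  destruct (classic (exists m, (m <= N)%nat /\ T m = t)) as [[m [Hm Em]]|Hn].
  - rewrite !(sum_single _ N m Hm).
    + destruct (Req_EM_T (T m) t); [reflexivity| contradiction].
    + intros k Hk Hkm. destruct (Req_EM_T (T k) t); auto. exfalso. apply Hkm. apply (T_inj T HT). congruence.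
    + intros k Hk Hkm. destruct (Req_EM_T (T k) t); auto. exfalso. apply Hkm. apply (T_inj T HT). congruence.
  - rewrite !sum_zero. ring.
    + intros k Hk. destruct (Req_EM_T (T k) t); auto. exfalso. apply Hn. exists k. auto.
    + intros k Hk. destruct (Req_EM_T (T k) t); auto. exfalso. apply Hn. exists k. auto.
Qed.

Lemma part_a t : 0 < t ->
     exists lS lL,
       left_lim (cp_S T J) t lS /\ left_lim (cp_L gam (Rmax p q) T J) t lL /\
       X t - Xm t = cnu * Xm t * (cp_S T J t - lS) /\
       cp_S T J t - lS = (cp_L gam (Rmax p q) T J t - lL) ^ 2.
Proof.
  intros Ht.
  destruct (T_bound T HT HTu (t + 1)) as [N HN].
  destruct (gap_all t) as [d [Hd Hgap]].
  assert (HSfin : forall x, x <= t + 1 -> cp_S T J x = sum_n (fun k => if Rle_dec (T k) x then J k ^ 2 else 0) N).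
  { intros x Hx. unfold cp_S. apply Series_fin. intros k Hk. specialize (HN k Hk). destruct (Rle_dec (T k) x); auto; lra. }
  assert (HLfin : forall x, x <= t + 1 -> cp_L gam (Rmax p q) T J x = gam * (x + Rmax p q) + sum_n (fun k => if Rle_dec (T k) x then J k else 0) N).
  { intros x Hx. unfold cp_L. f_equal. apply Series_fin. intros k Hk. specialize (HN k Hk). destruct (Rle_dec (T k) x); auto; lra. }
  assert (HDfin : forall x, x <= t + 1 -> Dfun x = sum_n (fun k => if Rlt_dec 0 (T k) then if Rle_dec (T k) x then ck k else 0 else 0) N).
  { intros x Hx. unfold Dfun. apply (dS_fin N (t + 1)); [|exact Hx]. intros k Hk. specialize (HN k Hk). lra. }
  set (lS := cp_S T J t - jk t N (fun k => J k ^ 2)).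
  set (lL := cp_L gam (Rmax p q) T J t - jk t N J).
  assert (ES : forall s, t - d < s < t -> cp_S T J s = lS).
  { intros s Hs. unfold lS. rewrite !HSfin by lra. unfold jk.
    assert (sum_n (fun k => if Rle_dec (T k) t then J k ^ 2 else 0) N - sum_n (fun k => if Rle_dec (T k) s then J k ^ 2 else 0) N
            = sum_n (fun k => if Req_EM_T (T k) t then J k ^ 2 else 0) N).
    { rewrite <- sum_minusR. apply sum_extR. intros k _. apply (diff_term t d s k); auto. }
    lra. }
  assert (EL : forall s, t - d < s < t -> cp_L gam (Rmax p q) T J s = lL + gam * (s - t)).
  { intros s Hs. unfold lL. rewrite !HLfin by lra. unfold jk.
    assert (sum_n (fun k => if Rle_dec (T k) t then J k else 0) N - sum_n (fun k => if Rle_dec (T k) s then J k else 0) N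
            = sum_n (fun k => if Req_EM_T (T k) t then J k else 0) N).
    { rewrite <- sum_minusR. apply sum_extR. intros k _. apply (diff_term t d s k); auto. }
    lra. }
  assert (ED : forall s, Rmax 0 (t - d) < s < t -> Dfun s = Dfun t - jk t N ck).
  { intros s Hs. pose proof (Rmax_l 0 (t - d)). pose proof (Rmax_r 0 (t - d)).
    rewrite !HDfin by lra. unfold jk.
    assert (sum_n (fun k => if Rlt_dec 0 (T k) then if Rle_dec (T k) t then ck k else 0 else 0) N
          - sum_n (fun k => if Rlt_dec 0 (T k) then if Rle_dec (T k) s then ck k else 0 else 0) N
          = sum_n (fun k => if Req_EM_T (T k) t then ck k else 0) N).
    { rewrite <- sum_minusR. apply sum_extR. intros k _. specialize (Hgap k).
      destruct (Rlt_dec 0 (T k)); destruct (Rle_dec (T k) t); destruct (Rle_dec (T k) s); destruct (Req_EM_T (T k) t); try lra;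
      exfalso; apply Hgap; lra. }
    lra. }
  exists lS, lL. split; [|split; [|split]].
  - unfold left_lim. apply left_const. exists d. split; auto.
  - unfold left_lim. apply left_lim_eps. intros e He.
    exists (Rmin d (e / (Rabs gam + 1))). split. { apply Rmin_pos; auto. apply Rdiv_lt_0_compat; auto. pose proof (Rabs_pos gam); lra. }
    intros y Hy. pose proof (Rmin_l d (e / (Rabs gam + 1))). pose proof (Rmin_r d (e / (Rabs gam + 1))).
    rewrite EL by lra. replace (lL + gam * (y - t) - lL) with (gam * (y - t)) by ring.
    rewrite Rabs_mult. rewrite (Rabs_left (y - t)) by lra. pose proof (Rabs_pos gam).
    apply Rle_lt_trans with ((Rabs gam + 1) * (- (y - t))). nra.
    apply Rlt_le_trans with ((Rabs gam + 1) * (e / (Rabs gam + 1))). apply Rmult_lt_compat_l; lra. right; field; lra.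
  -
    set (V := X 0 + eta * t + (Afun t - cmu * Ifun t) + (Bfun t + cnu * (Dfun t - jk t N ck))).
    assert (LimRHS : filterlim X (at_left t) (locally V)).
    { apply filterlim_ext_loc with (f := fun s => X 0 + eta * s + (Afun s - cmu * Ifun s) + (Bfun s + cnu * (Dfun t - jk t N ck))).
      - exists (mkposreal _ (Rmin_pos t d Ht Hd)). intros y Hy Hyt. simpl in Hy. apply ball_R in Hy.
        apply Rabs_lt_between' in Hy. pose proof (Rmin_l t d). pose proof (Rmin_r t d).
        rewrite (eq_RHS y) by lra. unfold RHS. rewrite (ED y). reflexivity.
        split; [|lra]. apply Rmax_lub_lt; lra.
      - unfold V. apply lim_plus. apply lim_plus. apply lim_plus. apply lim_const. apply lim_mult. apply lim_const. apply lim_id_left.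
        apply lim_minus. apply (limS_cont_left Afun t (Gfun t)). apply A_left; auto.
        apply lim_mult. apply lim_const. apply I_leftcont; auto.
        apply lim_plus. apply (limS_cont_left Bfun t (BLl t N)). apply (Bfun_left N (t + 1)); [intros k Hk; specialize (HN k Hk); lra| lra].
        apply lim_const. }
    assert (EXm : Xm t = V).
    { apply (unique_left t X). apply HXl. pose proof r_p. pose proof r_q. unfold r in *. lra. exact LimRHS. }
    assert (Ejk : jk t N ck = Xm t * jk t N (fun k => J k ^ 2)).
    { unfold jk. rewrite <- sum_scalR. apply sum_extR. intros k _. destruct (Req_EM_T (T k) t) as [E|E]. unfold ck; rewrite E; ring. ring. }
    assert (EXt : X t = RHS t) by (apply eq_RHS; lra).
    unfold lS. replace (cp_S T J t - (cp_S T J t - jk t N (fun k => J k ^ 2))) with (jk t N (fun k => J k ^ 2)) by ring.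
    assert (H1 : X t - Xm t = cnu * jk t N ck) by (rewrite EXt, EXm; unfold V, RHS; ring). rewrite H1, Ejk. ring.
  - unfold lS, lL. replace (cp_S T J t - (cp_S T J t - jk t N (fun k => J k ^ 2))) with (jk t N (fun k => J k ^ 2)) by ring.
    replace (cp_L gam (Rmax p q) T J t - (cp_L gam (Rmax p q) T J t - jk t N J)) with (jk t N J) by ring.
    symmetry. apply jk_sq. intros k Hk; specialize (HN k Hk); lra.
Qed.

Lemma within_of_eps (g : R -> R) (D : R -> Prop) t :
  (forall e, 0 < e -> exists d, 0 < d /\ forall s, D s -> Rabs (s - t) < d -> Rabs (g s - g t) < e) ->
  filterlim g (within D (locally t)) (locally (g t)).
Proof.
  intros H. apply filterlim_locally. intros eps. destruct (H eps (cond_pos eps)) as [d [Hd K]].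
  exists (mkposreal d Hd). intros y Hy HD. apply ball_R. apply K. exact HD. apply ball_R in Hy. exact Hy.
Qed.

Lemma T_le_iff n k s : T n <= s < T (Datatypes.S n) -> (T k <= s <-> (k <= n)%nat).
Proof.
  intros Hs. split.
  - intros Hk. destruct (Compare_dec.le_lt_dec k n) as [l|l]; auto.
    pose proof (T_le T HT (Datatypes.S n) k l). lra.
  - intros Hk. pose proof (T_le T HT k n Hk). lra.
Qed.

Definition xterm k s := if Rlt_dec (s - q) (T k) then
                       if Rle_dec (T k) s then fnu (T k - s) * Xm (T k) * (J k) ^ 2 else 0
                     else 0.

Lemma xterm_cont (Hq0 : fnu (- q) = 0) n k t :
  Rmax (T n) 0 <= t < T (Datatypes.S n) ->
  limS (fun h => Rmax (T n) 0 <= t + h < T (Datatypes.S n)) (fun h => xterm k (t + h)) (xterm k t).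
Proof.
  intros Ht e He. pose proof (Rmax_l (T n) 0). pose proof (Rmax_r (T n) 0).
  assert (Hiff : forall s, Rmax (T n) 0 <= s < T (Datatypes.S n) -> (T k <= s <-> (k <= n)%nat)).
  { intros s0 Hs0. apply T_le_iff. lra. }
  set (c := Xm (T k) * J k ^ 2).
  destruct (Compare_dec.le_lt_dec k n) as [Hkn|Hkn].
  -
    assert (HTk : T k <= t) by (apply (Hiff t Ht); auto).
    destruct (Rlt_dec (t - q) (T k)) as [H1|H1].
    + destruct (within_eps fnu (-q) 0 (T k - t) ltac:(lra) (Hfnu (T k - t) ltac:(lra)) (e / (Rabs c + 1))) as [d [Hd K]].
      { apply Rdiv_lt_0_compat; auto. pose proof (Rabs_pos c); lra. }
      exists (Rmin d (T k - (t - q))). split. { apply Rmin_pos; lra. }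
      intros h Hh Hhd. pose proof (Rmin_l d (T k - (t - q))). pose proof (Rmin_r d (T k - (t - q))).
      apply Rabs_lt_between in Hhd.
      assert (HTk' : T k <= t + h) by (apply (Hiff (t + h) Hh); auto).
      unfold xterm. destruct (Rlt_dec (t + h - q) (T k)); [|lra]. destruct (Rle_dec (T k) (t + h)); [|lra].
      destruct (Rlt_dec (t - q) (T k)); [|lra]. destruct (Rle_dec (T k) t); [|lra].
      replace (fnu (T k - (t + h)) * Xm (T k) * J k ^ 2 - fnu (T k - t) * Xm (T k) * J k ^ 2)
        with ((fnu (T k - (t + h)) - fnu (T k - t)) * c) by (unfold c; ring).
      rewrite Rabs_mult. pose proof (Rabs_pos c).
      assert (Rabs (fnu (T k - (t + h)) - fnu (T k - t)) < e / (Rabs c + 1)).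
      { apply K. lra. apply Rabs_lt_between'. lra. }
      apply Rle_lt_trans with (Rabs (fnu (T k - (t + h)) - fnu (T k - t)) * (Rabs c + 1)).
      { pose proof (Rabs_pos (fnu (T k - (t + h)) - fnu (T k - t))). nra. }
      apply Rlt_le_trans with (e / (Rabs c + 1) * (Rabs c + 1)). apply Rmult_lt_compat_r; lra. right; field; lra.
    + destruct (Req_dec (t - q) (T k)) as [E|E].
      * destruct (within_eps fnu (-q) 0 (-q) ltac:(lra) (Hfnu (-q) ltac:(lra)) (e / (Rabs c + 1))) as [d [Hd K]].
        { apply Rdiv_lt_0_compat; auto. pose proof (Rabs_pos c); lra. }
        exists d. split; auto. intros h Hh Hhd.
        assert (HTk' : T k <= t + h) by (apply (Hiff (t + h) Hh); auto).
        unfold xterm. destruct (Rlt_dec (t - q) (T k)); [lra|]. rewrite Rminus_0_r.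
        destruct (Rlt_dec (t + h - q) (T k)); [|rewrite Rabs_R0; lra]. destruct (Rle_dec (T k) (t + h)); [|lra].
        replace (fnu (T k - (t + h)) * Xm (T k) * J k ^ 2) with ((fnu (T k - (t + h)) - fnu (- q)) * c) by (rewrite Hq0; unfold c; ring).
        rewrite Rabs_mult. pose proof (Rabs_pos c).
        assert (Rabs (fnu (T k - (t + h)) - fnu (- q)) < e / (Rabs c + 1)).
        { apply K. lra. replace (T k - (t + h) - - q) with (- h) by lra. rewrite Rabs_Ropp. exact Hhd. }
        apply Rle_lt_trans with (Rabs (fnu (T k - (t + h)) - fnu (- q)) * (Rabs c + 1)).
        { pose proof (Rabs_pos (fnu (T k - (t + h)) - fnu (- q))). nra. }
        apply Rlt_le_trans with (e / (Rabs c + 1) * (Rabs c + 1)). apply Rmult_lt_compat_r; lra. right; field; lra.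
      * exists (t - q - T k). split. lra. intros h Hh Hhd. apply Rabs_lt_between in Hhd.
        unfold xterm. destruct (Rlt_dec (t - q) (T k)); [lra|]. destruct (Rlt_dec (t + h - q) (T k)); [lra|].
        rewrite Rminus_0_r, Rabs_R0. lra.
  - exists 1. split. lra. intros h Hh Hhd.
    assert (~ T k <= t + h). { intro C. apply (Hiff (t + h) Hh) in C. lia. }
    assert (~ T k <= t). { intro C. apply (Hiff t Ht) in C. lia. }
    unfold xterm. destruct (Rlt_dec (t + h - q) (T k)); destruct (Rle_dec (T k) (t + h)); try contradiction;
    destruct (Rlt_dec (t - q) (T k)); destruct (Rle_dec (T k) t); try contradiction; rewrite Rminus_0_r, Rabs_R0; lra.
Qed.

Lemma xiS_sum N Mb s : (forall k, (N < k)%nat -> Mb < T k) -> s <= Mb -> xiS s = sum_n (fun k => xterm k s) N.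
Proof.
  intros HN Hs. unfold xiS. apply Series_fin. intros k Hk. specialize (HN k Hk). unfold xterm.
  destruct (Rlt_dec (s - q) (T k)); auto. destruct (Rle_dec (T k) s); auto. lra.
Qed.

Lemma xi_cont (Hq0 : fnu (- q) = 0) n t : Rmax (T n) 0 <= t < T (Datatypes.S n) ->
  filterlim (xi p q fmu fnu T J X Xm)
    (within (fun s => Rmax (T n) 0 <= s < T (Datatypes.S n)) (locally t))
    (locally (xi p q fmu fnu T J X Xm t)).
Proof.
  intros Ht. apply within_of_eps. intros e He.
  pose proof (Rmax_l (T n) 0). pose proof (Rmax_r (T n) 0). pose proof r_p. pose proof r_q.
  destruct (T_bound T HT HTu (t + 1)) as [N HN].
  destruct fmu_bound as [W HW].
  assert (Hc1 : - r <= - p) by (pose proof r_p; lra). assert (Hc2 : - r <= t - p) by (pose proof r_p; lra).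
  destruct (Gc_cont X fmu (-r) (t + 1) p W (X_cadlag _) Hp fmu_cadlag HW t Hc2 ltac:(lra) (e/2) ltac:(lra)) as [d1 [Hd1 K1]].
  assert (HS := limS_sum (fun h => Rmax (T n) 0 <= t + h < T (Datatypes.S n)) (fun k h => xterm k (t + h)) (fun k => xterm k t) N
                  (fun k _ => xterm_cont Hq0 n k t Ht)).
  destruct (HS (e/2) ltac:(lra)) as [d2 [Hd2 K2]].
  exists (Rmin 1 (Rmin d1 d2)). split. { apply Rmin_pos. lra. apply Rmin_pos; lra. }
  intros s Hs Hsd. pose proof (Rmin_l 1 (Rmin d1 d2)). pose proof (Rmin_r 1 (Rmin d1 d2)).
  pose proof (Rmin_l d1 d2). pose proof (Rmin_r d1 d2).
  rewrite !xi_split. fold (Gfun s) (Gfun t).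
  assert (Hst : Rabs (s - t) < 1) by lra. apply Rabs_lt_between' in Hst.
  rewrite (xiS_sum N (t + 1) s) by (auto; lra). rewrite (xiS_sum N (t + 1) t) by (auto; lra).
  specialize (K1 s ltac:(lra) ltac:(lra) ltac:(lra)).
  specialize (K2 (s - t)). replace (t + (s - t)) with s in K2 by ring.
  specialize (K2 Hs ltac:(lra)).
  replace (Gfun s + sum_n (fun k => xterm k s) N - (Gfun t + sum_n (fun k => xterm k t) N))
    with ((Gfun s - Gfun t) + (sum_n (fun k => xterm k s) N - sum_n (fun k => xterm k t) N)) by ring.
  eapply Rle_lt_trans. apply Rabs_triang. unfold Gfun in *. unfold Gc in K1. lra.
Qed.

Lemma X_left N t d0 : (forall k, (N < k)%nat -> t + 1 < T k) -> 0 < t -> 0 < d0 ->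
  (forall k, ~ (t - d0 < T k <= t)) -> filterlim X (at_left t) (locally (X t)) ->
  limS Sneg (fun h => (X (t + h) - X t) / h) (eta + (Gfun t - cmu * X t) + (BLl t N + cnu * 0)).
Proof.
  intros HN Ht Hd0 Hgap HL.
  apply limS_ext with (q1 := fun h => (RHS (t + h) - RHS t) / h) (d0 := t).
  - lra.
  - intros h Hh Hhd. unfold Sneg in Hh. rewrite Rabs_left in Hhd by lra.
    rewrite <- !eq_RHS by lra. reflexivity.
  - apply limS_ext with (q1 := fun h => eta + ((Afun (t + h) - Afun t) / h - cmu * ((Ifun (t + h) - Ifun t) / h))
       + ((Bfun (t + h) - Bfun t) / h + cnu * ((Dfun (t + h) - Dfun t) / h))) (d0 := 1).
    + lra.
    + intros h Hh _. unfold Sneg in Hh. rewrite RHS_quot; auto. lra.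
    + apply limS_comb.
      * apply A_left; auto.
      * apply I_left; auto.
      * apply (Bfun_left N (t + 1)); [intros k Hk; specialize (HN k Hk); lra| lra].
      * apply limS_ext with (q1 := fun _ => 0) (d0 := Rmin d0 t). apply Rmin_pos; lra.
        intros h Hh Hhd. unfold Sneg in Hh. rewrite Rabs_left in Hhd by lra.
        pose proof (Rmin_l d0 t). pose proof (Rmin_r d0 t).
        rewrite <- (D_const (t + h) t). unfold Rdiv; ring. lra.
        intros k Hk. apply (Hgap k). split; lra.
        apply limS_const.
Qed.

Lemma limS_at_right (g : R -> R) l : limS Spos g l -> filterlim g (at_right 0) (locally l).
Proof.
  intros H. apply right_lim_eps. intros e He. destruct (H e He) as [d [Hd K]].
  exists d. split; auto. intros y Hy. apply K. unfold Spos; lra. rewrite Rabs_right; lra.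
Qed.

Lemma gap_interval n : forall k, ~ (T n < T k < T (Datatypes.S n)).
Proof.
  intros k [H1 H2]. destruct (Compare_dec.le_lt_dec k n) as [l|l].
  - pose proof (T_le T HT k n l). lra.
  - pose proof (T_le T HT (Datatypes.S n) k l). lra.
Qed.

Lemma part_b2 (Hq0 : fnu (- q) = 0) n : Rmax (T n) 0 < T (Datatypes.S n) ->
  filterlim (fun h => (X (Rmax (T n) 0 + h) - X (Rmax (T n) 0)) / h) (at_right 0)
    (locally (eta - cmu * X (Rmax (T n) 0) + xi p q fmu fnu T J X Xm (Rmax (T n) 0))).
Proof.
  intros Ha. set (a := Rmax (T n) 0) in *. pose proof (Rmax_l (T n) 0). pose proof (Rmax_r (T n) 0).
  destruct (T_bound T HT HTu (a + 1)) as [N HN].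
  apply limS_at_right.
  eapply limS_morph; [intros; reflexivity| |].
  2:{ apply (X_right N a (T (Datatypes.S n) - a)); auto; try lra.
      intros k Hk. pose proof (gap_interval n k). unfold a in *. lra. }
  rewrite xi_split. rewrite (xiS_fin N (a + 1) a); [lra| |lra].
  intros k Hk; specialize (HN k Hk); lra.
Qed.

Lemma part_b3 (Hq0 : fnu (- q) = 0) n t : Rmax (T n) 0 < t < T (Datatypes.S n) ->
  is_derive X t (eta - cmu * X t + xi p q fmu fnu T J X Xm t).
Proof.
  intros Ht. set (a := Rmax (T n) 0) in *. pose proof (Rmax_l (T n) 0). pose proof (Rmax_r (T n) 0).
  fold a in H, H0.
  destruct (T_bound T HT HTu (t + 1)) as [N HN].
  assert (Hnj : forall k, T k <> t).
  { intros k E. apply (gap_interval n k). lra. }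
  assert (HL : filterlim X (at_left t) (locally (X t))).
  { destruct (part_a t ltac:(lra)) as [lS [lL [HlS [HlL [Hj _]]]]].
    assert (HS : left_lim (cp_S T J) t (cp_S T J t)).
    { unfold left_lim. apply left_const. exists (t - a). split. lra.
      intros y Hy. unfold cp_S. apply Series_ext. intros k.
      destruct (Rle_dec (T k) y); destruct (Rle_dec (T k) t); auto; try lra.
      exfalso. apply (gap_interval n k). split; lra. }
    assert (ElS : lS = cp_S T J t) by (apply (unique_left t (cp_S T J)); auto).
    rewrite ElS, Rminus_diag, Rmult_0_r in Hj.
    assert (E : Xm t = X t) by lra.
    rewrite <- E. apply HXl. pose proof r_p. pose proof r_q. unfold r in *. lra. }
  assert (Eq : BLl t N = BLr t N).
  { unfold BLl, BLr. apply sum_extR. intros k _. f_equal. unfold Ll, Lr. specialize (Hnj k).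
    destruct (Rle_dec (- q) (T k - t)); destruct (Rlt_dec (T k - t) 0); destruct (Rlt_dec (- q) (T k - t));
      try destruct (Rle_dec (T k - t) 0);
      first [reflexivity | lra | (exfalso; apply Hnj; lra) | (replace (T k - t) with (- q) by lra; rewrite Hq0; reflexivity)]. }
  assert (Exi : eta - cmu * X t + xi p q fmu fnu T J X Xm t = eta + (Gfun t - cmu * X t) + (BLr t N + cnu * 0)).
  { rewrite xi_split. rewrite (xiS_fin N (t + 1) t); [lra| |lra]. intros k Hk; specialize (HN k Hk); lra. }
  rewrite Exi. apply limS_deriv.
  - apply (X_right N t (T (Datatypes.S n) - t)); auto; try lra.
    intros k Hk. apply (gap_interval n k). lra.
  - rewrite <- Eq. apply (X_left N t (t - a)); auto; try lra.
    intros k Hk. apply (gap_interval n k). destruct (Req_dec (T k) t). exfalso; apply (Hnj k); auto. lra.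
Qed.

Lemma part_b4 (Hq0 : fnu (- q) = 0) : 0 < p -> q = 0 ->
  forall n t, Rmax (T n) 0 < t < T (Datatypes.S n) ->
    is_derive X t (eta - cmu * X t + RInt (fun u => fmu u * X (t + u)) (- p) 0).
Proof.
  intros Hp0 Hq1 n t Ht.
  pose proof (part_b3 Hq0 n t Ht) as H.
  rewrite xi_split in H. unfold xiS in H. rewrite Series_zero in H.
  - rewrite Rplus_0_r in H. exact H.
  - intros k. destruct (Rlt_dec (t - q) (T k)); auto. destruct (Rle_dec (T k) t); auto. lra.
Qed.

Lemma part_b5 (Hq0 : fnu (- q) = 0) : p = 0 -> q = 0 ->
  forall n t, T n < t < T (Datatypes.S n) ->
    X t = eta / cmu + (X (T n) - eta / cmu) * exp (- cmu * (t - T n)).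
Proof.
  intros Hp0 Hq1 n t Ht.
  assert (Hr0 : r = 0) by (unfold r; rewrite Hp0, Hq1; apply Rmax_left; lra).
  assert (HTn : 0 < T n). { pose proof (T_le T HT 0 n ltac:(lia)). unfold r in Hr0. lra. }
  assert (Ha : Rmax (T n) 0 = T n) by (apply Rmax_left; lra).
  apply (ode X (T n) (T (Datatypes.S n)) eta cmu); auto; try lra.
  - apply HXr. unfold r in Hr0. lra.
  - intros s Hs. rewrite <- Ha in Hs. pose proof (part_b3 Hq0 n s Hs) as H.
    rewrite xi_split in H. unfold xiS in H. rewrite Series_zero in H.
    + unfold Gfun in H. rewrite Hp0, Ropp_0, RInt_pointR in H. rewrite !Rplus_0_r in H. exact H.
    + intros k. destruct (Rlt_dec (s - q) (T k)); auto. destruct (Rle_dec (T k) s); auto. lra.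
Qed.

Lemma main_all :
  (forall t, 0 < t ->
     exists lS lL,
       left_lim (cp_S T J) t lS /\ left_lim (cp_L gam (Rmax p q) T J) t lL /\
       X t - Xm t = cnu * Xm t * (cp_S T J t - lS) /\
       cp_S T J t - lS = (cp_L gam (Rmax p q) T J t - lL) ^ 2)
  /\
  (fnu (- q) = 0 ->
     (forall n t, Rmax (T n) 0 <= t < T (Datatypes.S n) ->
        filterlim (xi p q fmu fnu T J X Xm)
          (within (fun s => Rmax (T n) 0 <= s < T (Datatypes.S n)) (locally t))
          (locally (xi p q fmu fnu T J X Xm t)))
     /\
     (forall n, Rmax (T n) 0 < T (Datatypes.S n) ->
                filterlim (fun h => (X (Rmax (T n) 0 + h) - X (Rmax (T n) 0)) / h)
                  (at_right 0)
                  (locally (eta - cmu * X (Rmax (T n) 0)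
                            + xi p q fmu fnu T J X Xm (Rmax (T n) 0))))
     /\
     (forall n t, Rmax (T n) 0 < t < T (Datatypes.S n) ->
        is_derive X t (eta - cmu * X t + xi p q fmu fnu T J X Xm t))
     /\
     (0 < p -> q = 0 ->
        forall n t, Rmax (T n) 0 < t < T (Datatypes.S n) ->
          is_derive X t (eta - cmu * X t + RInt (fun u => fmu u * X (t + u)) (- p) 0))
     /\
     (p = 0 -> q = 0 ->
        forall n t, T n < t < T (Datatypes.S n) ->
          X t = eta / cmu + (X (T n) - eta / cmu) * exp (- cmu * (t - T n)))).
Proof.
  split.
  - exact part_a.
  - intros Hq0. split; [|split; [|split; [|split]]].
    + exact (xi_cont Hq0).
    + exact (part_b2 Hq0).
    + exact (part_b3 Hq0).
    + exact (part_b4 Hq0).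
    + exact (part_b5 Hq0).
Qed.

End Main.

Theorem proposition4p10
  (p q eta cmu cnu gam : R) (fmu fnu : R -> R) (T J : nat -> R) (X Xm : R -> R) :
  0 <= p -> 0 <= q -> 0 < eta -> 0 < cmu -> 0 < cnu ->
  (* f_mu, f_nu nonnegative and continuous on [-p,0], [-q,0] *)
  (forall u, - p <= u <= 0 -> 0 <= fmu u) ->
  (forall u, - p <= u <= 0 ->
     filterlim fmu (within (fun v => - p <= v <= 0) (locally u)) (locally (fmu u))) ->
  (forall u, - q <= u <= 0 -> 0 <= fnu u) ->
  (forall u, - q <= u <= 0 ->
     filterlim fnu (within (fun v => - q <= v <= 0) (locally u)) (locally (fnu u))) ->
  (* compound Poisson path: -r < T_0 < T_1 < ..., T_n -> oo, nonzero jump sizes *)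
  (forall n, T n < T (Datatypes.S n)) ->
  - Rmax p q < T 0%nat ->
  (forall M, exists n, M < T n) ->
  (forall n, J n <> 0) ->
  (* X is cadlag on [-r,oo), Xm its left-limit process *)
  (forall t, - Rmax p q <= t -> filterlim X (at_right t) (locally (X t))) ->
  (forall t, - Rmax p q < t -> left_lim X t (Xm t)) ->
  (* X solves the CDGARCH(p,q) equation for t > 0 *)
  (forall t, 0 < t -> cdgarch_eq p q eta cmu cnu fmu fnu T J X Xm t) ->
  (* (a) *)
  (forall t, 0 < t ->
     exists lS lL,
       left_lim (cp_S T J) t lS /\ left_lim (cp_L gam (Rmax p q) T J) t lL /\
       X t - Xm t = cnu * Xm t * (cp_S T J t - lS) /\
       cp_S T J t - lS = (cp_L gam (Rmax p q) T J t - lL) ^ 2)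
  /\
  (* (b) *)
  (fnu (- q) = 0 ->
     (forall n t, Rmax (T n) 0 <= t < T (Datatypes.S n) ->
        filterlim (xi p q fmu fnu T J X Xm)
          (within (fun s => Rmax (T n) 0 <= s < T (Datatypes.S n)) (locally t))
          (locally (xi p q fmu fnu T J X Xm t)))
     /\
     (forall n, Rmax (T n) 0 < T (Datatypes.S n) ->
                filterlim (fun h => (X (Rmax (T n) 0 + h) - X (Rmax (T n) 0)) / h)
                  (at_right 0)
                  (locally (eta - cmu * X (Rmax (T n) 0)
                            + xi p q fmu fnu T J X Xm (Rmax (T n) 0))))
     /\
     (forall n t, Rmax (T n) 0 < t < T (Datatypes.S n) ->
        is_derive X t (eta - cmu * X t + xi p q fmu fnu T J X Xm t))
     /\
     (0 < p -> q = 0 ->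
        forall n t, Rmax (T n) 0 < t < T (Datatypes.S n) ->
          is_derive X t (eta - cmu * X t + RInt (fun u => fmu u * X (t + u)) (- p) 0))
     /\
     (p = 0 -> q = 0 ->
        forall n t, T n < t < T (Datatypes.S n) ->
          X t = eta / cmu + (X (T n) - eta / cmu) * exp (- cmu * (t - T n)))).
Proof.
  intros Hp Hq Heta Hcmu Hcnu Hfmu0 Hfmu Hfnu0 Hfnu HT HT0 HTu HJ HXr HXl Heq.
  eapply main_all; eassumption.
Qed.
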